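(* Let $C\in\{0.15,0.45\}$ and define on $[-\pi,\pi]$ $$z_1(x)=2e^{1-\frac{1}{1-(x/\pi)^2}}-1,\qquad z_2(x)=\sin(x-C),$$ where $z_1(\pm\pi)=-1$ (the continuous, indeed smooth, extension). Then the curvature $$K(x)=\frac{-\partial_{xx}z_1(x)\,\partial_x z_2(x)+\partial_{xx}z_2(x)\,\partial_x z_1(x)}{\big(\partial_x z_1(x)^2+\partial_x z_2(x)^2\big)^{3/2}}$$ of the closed curve $x\mapsto(z_1(x),z_2(x))$ vanishes, for $x\in(-\pi,\pi]$, only at $x=\pi$.
   Context: Derivatives of $z_1$ at $x=\pm\pi$ are understood as limits (all of them equal $0$); the curve $(z_1,z_2)$ is regarded as $2\pi$-periodic, so $x=-\pi$ and $x=\pi$ represent the same point. *)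

(* Defs.v *)
From Stdlib Require Import Reals.
From Coquelicot Require Import Coquelicot.
Open Scope R_scope.

(* This is the smooth
   (flat) extension; in particular z1(+-pi) = -1 and all derivatives at
   +-pi exist and equal 0, i.e. they coincide with the limits. *)
Definition z1 (x : R) : R :=
  if Rlt_dec (Rabs x) PI
  then 2 * exp (1 - 1 / (1 - (x / PI) ^ 2)) - 1
  else -1.

Definition z2 (C : R) (x : R) : R := sin (x - C).

Definition K (C : R) (x : R) : R :=
  (- Derive_n z1 2 x * Derive (z2 C) x + Derive_n (z2 C) 2 x * Derive z1 x)
  / Rpower (Derive z1 x ^ 2 + Derive (z2 C) x ^ 2) (3 / 2).

(* Main.v *)
Require Import Defs.
From Stdlib Require Import Reals.
From Coquelicot Require Import Coquelicot.
From Stdlib Require Import Lra Lia ZArith.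
Open Scope R_scope.

Fixpoint Zfact (n:nat) : Z := match n with O => 1%Z | S m => (Z.of_nat (S m) * Zfact m)%Z end.
Lemma INR_fact_Z n : INR (fact n) = IZR (Zfact n).
Proof.
  induction n as [|n IH]; [reflexivity|].
  rewrite fact_simpl, mult_INR, IH. change (Zfact (S n)) with (Z.of_nat (S n) * Zfact n)%Z.
  rewrite mult_IZR, <- INR_IZR_INZ. reflexivity.
Qed.
Lemma sin_term_Z a i : sin_term a i = (-1)^i * (a^(2*i+1) / IZR (Zfact (2*i+1))).
Proof. unfold sin_term. rewrite INR_fact_Z. reflexivity. Qed.
Lemma cos_term_Z a i : cos_term a i = (-1)^i * (a^(2*i) / IZR (Zfact (2*i))).
Proof. unfold cos_term. rewrite INR_fact_Z. reflexivity. Qed.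

Ltac expand_approx := unfold sin_approx, cos_approx; cbv [sum_f_R0];
  rewrite ?sin_term_Z, ?cos_term_Z;
  cbv [Zfact Nat.mul Nat.add Z.of_nat Pos.of_succ_nat Pos.succ Z.mul Pos.mul Pos.add]; field.

Lemma sin_approx_7 a : sin_approx a 7 = a - a^3/6 + a^5/120 - a^7/5040 + a^9/362880 - a^11/39916800 + a^13/6227020800 - a^15/1307674368000.
Proof. expand_approx. Qed.
Lemma sin_approx_8 a : sin_approx a 8 = a - a^3/6 + a^5/120 - a^7/5040 + a^9/362880 - a^11/39916800 + a^13/6227020800 - a^15/1307674368000 + a^17/355687428096000.
Proof. expand_approx. Qed.
Lemma cos_approx_7 a : cos_approx a 7 = 1 - a^2/2 + a^4/24 - a^6/720 + a^8/40320 - a^10/3628800 + a^12/479001600 - a^14/87178291200.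
Proof. expand_approx. Qed.
Lemma cos_approx_8 a : cos_approx a 8 = 1 - a^2/2 + a^4/24 - a^6/720 + a^8/40320 - a^10/3628800 + a^12/479001600 - a^14/87178291200 + a^16/20922789888000.
Proof. expand_approx. Qed.
Lemma cos_approx_1 a : cos_approx a 1 = 1 - a^2/2.
Proof. expand_approx. Qed.

Lemma sin_bnd t l u : 0 <= t <= 4 -> l <= sin_approx t 7 -> sin_approx t 8 <= u -> l <= sin t <= u.
Proof. intros Ht H1 H2. destruct (pre_sin_bound t 3) as [A B]; try lra. simpl in A, B |- *. lra. Qed.
Lemma sin_bnd_neg t l u : -4 <= t <= 0 -> -u <= sin_approx (-t) 7 -> sin_approx (-t) 8 <= -l -> l <= sin t <= u.
Proof. intros Ht H1 H2. destruct (pre_sin_bound (-t) 3) as [A B]; try lra. rewrite sin_neg in A, B. simpl in A, B. lra. Qed.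
Lemma cos_bnd t l u : -2 <= t <= 2 -> l <= cos_approx t 7 -> cos_approx t 8 <= u -> l <= cos t <= u.
Proof. intros Ht H1 H2. destruct (pre_cos_bound t 3) as [A B]; try lra. simpl in A, B. lra. Qed.
Lemma cos_bnd_half t l u l2 u2 : 0 <= l2 -> l2 <= cos (t/2) <= u2 -> l <= 2*l2^2-1 -> 2*u2^2-1 <= u -> l <= cos t <= u.
Proof.
  intros H0 H H1 H2. replace t with (2*(t/2)) by field. rewrite cos_2a_cos.
  assert (l2*l2 <= cos (t/2) * cos (t/2) <= u2*u2) by (split; apply Rmult_le_compat; lra).
  simpl in H1, H2. lra.
Qed.


Definition PL := 314159/100000.
Definition PU := 31416/10000.

Ltac num := unfold PL, PU; rewrite ?sin_approx_7, ?sin_approx_8, ?cos_approx_7, ?cos_approx_8; simpl pow; lra.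

Lemma PI_lb : PL < PI.
Proof.
  unfold PL. assert (H: 314159/200000 < PI/2); [|lra].
  apply PI2_lower_bound; [lra|].
  destruct (pre_cos_bound (314159/200000) 3) as [A _]; try lra. simpl in A.
  rewrite cos_approx_7 in A. simpl pow in A. lra.
Qed.
Lemma PI_ub : PI < PU.
Proof.
  unfold PU. destruct (Rlt_or_le PI (31416/10000)) as [H|H]; auto. exfalso.
  assert (H0 : 0 <= cos (31416/20000)) by (apply cos_ge_0; lra).
  destruct (pre_cos_bound (31416/20000) 3) as [_ B]; try lra. simpl in B.
  rewrite cos_approx_8 in B. simpl pow in B. lra.
Qed.


Lemma abs_sin_le z : Rabs (sin z) <= Rabs z.
Proof.
  assert (K: forall z, 0 <= z -> Rabs (sin z) <= z).
  { intros y Hy. destruct (Req_dec y 0) as [->|Hn]. rewrite sin_0, Rabs_R0; lra.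
    assert (sin y < y) by (apply sin_lt_x; lra).
    destruct (Rle_lt_dec y 1).
    - assert (0 <= sin y) by (apply sin_ge_0; generalize PI_lb; unfold PL; lra).
      rewrite Rabs_right; lra.
    - generalize (SIN_bound y); intros. apply Rabs_le; lra. }
  destruct (Rle_lt_dec 0 z). rewrite (Rabs_right z) by lra. auto.
  rewrite (Rabs_left z) by lra. replace (sin z) with (- sin (-z)) by (rewrite sin_neg; ring).
  rewrite Rabs_Ropp. apply K; lra.
Qed.

Lemma sin_lip u v : Rabs (sin u - sin v) <= Rabs (u - v).
Proof.
  rewrite form4. rewrite !Rabs_mult.
  generalize (abs_sin_le ((u - v)/2)) (COS_bound ((u+v)/2)) (Rabs_pos (sin ((u-v)/2))); intros A B P.
  assert (Rabs (cos ((u+v)/2)) <= 1) by (apply Rabs_le; lra).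
  replace (Rabs ((u-v)/2)) with (Rabs (u-v)/2) in A.
  2:{ unfold Rdiv. rewrite Rabs_mult, (Rabs_right (/2)) by lra. reflexivity. }
  rewrite (Rabs_right 2) by lra.
  assert (Rabs (cos ((u + v) / 2)) * Rabs (sin ((u - v) / 2)) <= 1 * (Rabs (u-v)/2)).
  { apply Rmult_le_compat; auto using Rabs_pos. }
  nra.
Qed.

Lemma cos_lip u v : Rabs (cos u - cos v) <= Rabs (u - v).
Proof.
  rewrite form2. rewrite !Rabs_mult.
  generalize (abs_sin_le ((u - v)/2)) (SIN_bound ((u+v)/2)) (Rabs_pos (sin ((u-v)/2))); intros A B P.
  assert (Rabs (sin ((u+v)/2)) <= 1) by (apply Rabs_le; lra).
  replace (Rabs ((u-v)/2)) with (Rabs (u-v)/2) in A.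
  2:{ unfold Rdiv. rewrite Rabs_mult, (Rabs_right (/2)) by lra. reflexivity. }
  rewrite (Rabs_left (-2)) by lra.
  assert (Rabs (sin ((u - v) / 2)) * Rabs (sin ((u + v) / 2)) <= (Rabs (u-v)/2) * 1).
  { apply Rmult_le_compat; auto using Rabs_pos. }
  nra.
Qed.

Lemma sin_near x c t0 w l u : l <= sin t0 <= u -> -w <= (x - c) - t0 <= w -> l - w <= sin (x - c) <= u + w.
Proof.
  intros H Hw. assert (A := sin_lip (x - c) t0). assert (Rabs (x - c - t0) <= w) by (apply Rabs_le; lra).
  apply Rabs_le_between' in A. lra.
Qed.
Lemma cos_near x c t0 w l u : l <= cos t0 <= u -> -w <= (x - c) - t0 <= w -> l - w <= cos (x - c) <= u + w.
Proof.
  intros H Hw. assert (A := cos_lip (x - c) t0). assert (Rabs (x - c - t0) <= w) by (apply Rabs_le; lra).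
  apply Rabs_le_between' in A. lra.
Qed.

Lemma mul_ub p q l1 u1 l2 u2 hi :
  l1 <= p <= u1 -> l2 <= q <= u2 ->
  l1*l2 <= hi /\ l1*u2 <= hi /\ u1*l2 <= hi /\ u1*u2 <= hi -> p*q <= hi.
Proof.
  intros [A B] [C D] (F1&F2&F3&F4).
  destruct (Rle_lt_dec 0 q) as [Hq|Hq].
  - assert (p*q <= u1*q) by (apply Rmult_le_compat_r; lra).
    destruct (Rle_lt_dec 0 u1).
    + assert (u1*q <= u1*u2) by (apply Rmult_le_compat_l; lra). lra.
    + assert (u1*q <= u1*l2) by nra. lra.
  - assert (p*q <= l1*q) by nra.
    destruct (Rle_lt_dec 0 l1).
    + assert (l1*q <= l1*u2) by (apply Rmult_le_compat_l; lra). lra.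
    + assert (l1*q <= l1*l2) by nra. lra.
Qed.
Lemma mul_lb p q l1 u1 l2 u2 lo :
  l1 <= p <= u1 -> l2 <= q <= u2 ->
  lo <= l1*l2 /\ lo <= l1*u2 /\ lo <= u1*l2 /\ lo <= u1*u2 -> lo <= p*q.
Proof.
  intros H1 H2 (F1&F2&F3&F4).
  assert (p * (-q) <= -lo); [|lra].
  apply (mul_ub _ _ l1 u1 (-u2) (-l2)); [lra|lra|]. repeat split; lra.
Qed.
Lemma mul_bnd p q l1 u1 l2 u2 lo hi :
  l1 <= p <= u1 -> l2 <= q <= u2 ->
  lo <= l1*l2 /\ lo <= l1*u2 /\ lo <= u1*l2 /\ lo <= u1*u2 /\
  l1*l2 <= hi /\ l1*u2 <= hi /\ u1*l2 <= hi /\ u1*u2 <= hi ->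
  lo <= p*q <= hi.
Proof.
  intros A B (E1&E2&E3&E4&F1&F2&F3&F4). split.
  apply (mul_lb _ _ l1 u1 l2 u2); auto.
  apply (mul_ub _ _ l1 u1 l2 u2); auto.
Qed.

Lemma x4_pos a b x : 0 <= a <= x -> x <= b -> a^4 <= x^4 <= b^4.
Proof. intros. split; apply pow_incr; lra. Qed.
Lemma x4_neg a b x : a <= x -> x <= b <= 0 -> b^4 <= x^4 <= a^4.
Proof.
  intros. replace (x^4) with ((-x)^4) by ring. replace (b^4) with ((-b)^4) by ring.
  replace (a^4) with ((-a)^4) by ring. split; apply pow_incr; lra.
Qed.
Lemma PI4 : PL^4 <= PI^4 <= PU^4.
Proof. generalize PI_lb PI_ub; intros. unfold PL, PU in *. split; apply pow_incr; lra. Qed.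
Lemma PI2 : PL^2 <= PI^2 <= PU^2.
Proof. generalize PI_lb PI_ub; intros. unfold PL, PU in *. split; apply pow_incr; lra. Qed.
Lemma x2_pos a b x : 0 <= a <= x -> x <= b -> a^2 <= x^2 <= b^2.
Proof. intros. split; apply pow_incr; lra. Qed.
Lemma x2_neg a b x : a <= x -> x <= b <= 0 -> b^2 <= x^2 <= a^2.
Proof.
  intros. replace (x^2) with ((-x)^2) by ring. replace (b^2) with ((-b)^2) by ring.
  replace (a^2) with ((-a)^2) by ring. split; apply pow_incr; lra.
Qed.
Lemma sq_bnd q l u : 0 <= l <= q -> q <= u -> l^2 <= q^2 <= u^2.
Proof. intros. split; apply pow_incr; lra. Qed.

Definition Gf (C x : R) := (3*x^4 - PI^4) * cos (x - C) - x * (PI^2 - x^2)^2 * sin (x - C).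

Lemma G_final C x l1 u1 lq uq lx ux ls us lc uc lQ uQ lP2 uP2 hA lB :
  l1 <= 3*x^4 - PI^4 <= u1 ->
  lq <= PI^2 - x^2 <= uq -> 0 <= lq ->
  lx <= x <= ux ->
  ls <= sin (x - C) <= us -> lc <= cos (x - C) <= uc ->
  lQ <= lq^2 -> uq^2 <= uQ ->
  lP2 <= lx*lQ /\ lP2 <= lx*uQ /\ lP2 <= ux*lQ /\ lP2 <= ux*uQ /\
  lx*lQ <= uP2 /\ lx*uQ <= uP2 /\ ux*lQ <= uP2 /\ ux*uQ <= uP2 ->
  (l1*lc <= hA /\ l1*uc <= hA /\ u1*lc <= hA /\ u1*uc <= hA) ->
  (lB <= lP2*ls /\ lB <= lP2*us /\ lB <= uP2*ls /\ lB <= uP2*us) ->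
  hA - lB < 0 ->
  Gf C x < 0.
Proof.
  intros H1 Hq Hq0 Hx Hs Hc HQ1 HQ2 HP2 HA HB Hfin.
  assert (HQ : lQ <= (PI^2 - x^2)^2 <= uQ).
  { assert (lq^2 <= (PI^2-x^2)^2 <= uq^2) by (apply sq_bnd; lra). lra. }
  assert (HP : lP2 <= x * (PI^2 - x^2)^2 <= uP2) by (apply (mul_bnd _ _ lx ux lQ uQ); auto).
  destruct HA as (A1&A2&A3&A4). destruct HB as (B1&B2&B3&B4).
  assert (X : (3*x^4 - PI^4) * cos (x - C) <= hA).
  { apply (mul_ub _ _ l1 u1 lc uc); auto. }
  assert (Y : lB <= x * (PI^2 - x^2)^2 * sin (x - C)).
  { apply (mul_lb _ _ lP2 uP2 ls us); auto. }
  unfold Gf. lra.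
Qed.

Lemma p1_pos a b x l u : 0 <= a -> a <= x <= b -> l <= 3*a^4 - PU^4 -> 3*b^4 - PL^4 <= u -> l <= 3*x^4 - PI^4 <= u.
Proof. intros. generalize (x4_pos a b x ltac:(lra) ltac:(lra)) PI4. lra. Qed.
Lemma p1_neg a b x l u : b <= 0 -> a <= x <= b -> l <= 3*b^4 - PU^4 -> 3*a^4 - PL^4 <= u -> l <= 3*x^4 - PI^4 <= u.
Proof. intros. generalize (x4_neg a b x ltac:(lra) ltac:(lra)) PI4. lra. Qed.
Lemma q_pos a b x l u : 0 <= a -> a <= x <= b -> l <= PL^2 - b^2 -> PU^2 - a^2 <= u -> l <= PI^2 - x^2 <= u.
Proof. intros. generalize (x2_pos a b x ltac:(lra) ltac:(lra)) PI2. lra. Qed.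
Lemma q_neg a b x l u : b <= 0 -> a <= x <= b -> l <= PL^2 - a^2 -> PU^2 - b^2 <= u -> l <= PI^2 - x^2 <= u.
Proof. intros. generalize (x2_neg a b x ltac:(lra) ltac:(lra)) PI2. lra. Qed.

Lemma E_pos c x : 15/100 <= c <= 45/100 -> 3 <= x < PI -> Gf c x < 0.
Proof.
  intros Hc Hx. generalize PI_lb PI_ub; unfold PL, PU; intros.
  assert (Hcos : -1 <= cos (x - c) <= -82/100).
  { assert (E : cos (x - c) = - cos (x - c - PI)) by (rewrite <- neg_cos; f_equal; ring).
    destruct (pre_cos_bound (x - c - PI) 0) as [A _]; try lra. simpl in A; rewrite cos_approx_1 in A.
    generalize (COS_bound (x-c)). intros. split; [lra|].
    assert ((x - c - PI)^2 <= 36/100) by nra. lra. }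
  assert (Hsin := SIN_bound (x - c)).
  assert (H1 : (3*3^4 - (31416/10000)^4) - 1 <= 3*x^4 - PI^4 <= 3*(31416/10000)^4 - (314159/100000)^4 + 1).
  { generalize (x4_pos 3 (31416/10000) x ltac:(lra) ltac:(lra)) PI4; unfold PL, PU; lra. }
  assert (H2 : 0 <= PI^2 - x^2 <= (31416/10000)^2 - 9).
  { generalize PI2; unfold PL, PU; intros. split; nra. }
  apply (G_final c x ((3*3^4 - (31416/10000)^4) - 1) (3*(31416/10000)^4 - (314159/100000)^4 + 1) 0 ((31416/10000)^2 - 9) 3 (31416/10000) (-1) 1 (-1) (-82/100)
     (0) (3781461/5000000) (0) (5939919/2500000) (-1193837981/10000000 + 3) (-5939919/2500000)); try assumption; try lra; try num; repeat split; num.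
Qed.

Lemma E_neg c x : 15/100 <= c <= 45/100 -> -PI < x <= -265/100 -> Gf c x < 0.
Proof.
  intros Hc Hx. generalize PI_lb PI_ub; unfold PL, PU; intros.
  assert (Hcos : -1 <= cos (x - c) <= -898/1000).
  { assert (E : cos (x - c) = - cos (x - c + PI)) by (rewrite neg_cos; ring).
    destruct (pre_cos_bound (x - c + PI) 0) as [A _]; try lra. simpl in A; rewrite cos_approx_1 in A.
    generalize (COS_bound (x-c)). intros. split; [lra|].
    assert ((x - c + PI)^2 <= 2025/10000) by nra. lra. }
  assert (Hsin := SIN_bound (x - c)).
  assert (H1 : (3*(265/100)^4 - (31416/10000)^4) - 1 <= 3*x^4 - PI^4 <= 3*(31416/10000)^4 - (314159/100000)^4 + 1).
  { generalize (x4_neg (-31416/10000) (-265/100) x ltac:(lra) ltac:(lra)) PI4; unfold PL, PU; intros.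
    simpl pow in *. lra. }
  assert (H2 : 0 <= PI^2 - x^2 <= (31416/10000)^2 - (265/100)^2).
  { generalize PI2; unfold PL, PU; intros. split; nra. }
  apply (G_final c x ((3*(265/100)^4 - (31416/10000)^4) - 1) (3*(31416/10000)^4 - (314159/100000)^4 + 1) 0 ((31416/10000)^2 - (265/100)^2) (-31416/10000) (-265/100) (-1) 1 (-1) (-898/1000)
     (0) (40531333/5000000) (-31833309/1250000) (0) (-226908959/5000000 + 1) (-31833309/1250000)); try assumption; try lra; try num; repeat split; num.
Qed.
Lemma IA0 : forall x, (-53/20) <= x <= (-49/20) -> Gf (15/100) x < 0.
Proof.
  intros x Hx.
  assert (Hs0 : (-4273799/10000000) <= sin (-27/10) <= (-2136899/5000000)) by (apply sin_bnd_neg; [lra|num|num]).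
  assert (Hc0 : (-9040723/10000000) <= cos (-27/10) <= (-9040721/10000000)).
  { apply (cos_bnd_half _ _ _ (1095033/5000000) (2190067/10000000)); [lra| apply cos_bnd; [lra|num|num] |lra|lra]. }
  assert (Hs := sin_near x (15/100) (-27/10) (1/10) _ _ Hs0 ltac:(lra)).
  assert (Hc := cos_near x (15/100) (-27/10) (1/10) _ _ Hc0 ltac:(lra)).
  assert (H1 : (21360033/2000000) <= 3*x^4 - PI^4 <= (505377569/10000000)) by (apply (p1_neg (-53/20) (-49/20)); [lra|lra|num|num]).
  assert (H2 : (28470877/10000000) <= PI^2 - x^2 <= (19335753/5000000)) by (apply (q_neg (-53/20) (-49/20)); [lra|lra|num|num]).
  apply (G_final (15/100) x (21360033/2000000) (505377569/10000000) (28470877/10000000) (19335753/5000000) (-53/20) (-49/20) ((-4273799/10000000) - (1/10)) ((-2136899/5000000) + (1/10)) ((-9040723/10000000) - (1/10)) ((-9040721/10000000) + (1/10)) (81059083/10000000) (74774269/5000000) (-198151813/5000000) (-198594753/10000000) (-10734379/1250000) (6501591/1000000)); try assumption; try lra; try num; repeat split; num.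
Qed.

Lemma IA1 : forall x, (-49/20) <= x <= (-23/10) -> Gf (15/100) x < 0.
Proof.
  intros x Hx.
  assert (Hs0 : (-5782587/10000000) <= sin (-101/40) <= (-2891293/5000000)) by (apply sin_bnd_neg; [lra|num|num]).
  assert (Hc0 : (-1019817/1250000) <= cos (-101/40) <= (-4079267/5000000)).
  { apply (cos_bnd_half _ _ _ (3034357/10000000) (1517179/5000000)); [lra| apply cos_bnd; [lra|num|num] |lra|lra]. }
  assert (Hs := sin_near x (15/100) (-101/40) (3/40) _ _ Hs0 ltac:(lra)).
  assert (Hc := cos_near x (15/100) (-101/40) (3/40) _ _ Hc0 ltac:(lra)).
  assert (H1 : (-67288511/5000000) <= 3*x^4 - PI^4 <= (106812569/10000000)) by (apply (p1_neg (-49/20) (-23/10)); [lra|lra|num|num]).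
  assert (H2 : (38670877/10000000) <= PI^2 - x^2 <= (22898253/5000000)) by (apply (q_neg (-49/20) (-23/10)); [lra|lra|num|num]).
  apply (G_final (15/100) x (-67288511/5000000) (106812569/10000000) (38670877/10000000) (22898253/5000000) (-49/20) (-23/10) ((-5782587/10000000) - (3/40)) ((-2891293/5000000) + (3/40)) ((-1019817/1250000) - (3/40)) ((-4079267/5000000) + (3/40)) (18692959/1250000) (209731997/10000000) (-513843393/10000000) (-68790089/2000000) (4795537/400000) (173096019/10000000)); try assumption; try lra; try num; repeat split; num.
Qed.

Lemma IA2 : forall x, (-23/10) <= x <= (-43/20) -> Gf (15/100) x < 0.
Proof.
  intros x Hx.
  assert (Hs0 : (-6936851/10000000) <= sin (-19/8) <= (-138737/200000)) by (apply sin_bnd_neg; [lra|num|num]).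
  assert (Hc0 : (-3601393/5000000) <= cos (-19/8) <= (-7202783/10000000)).
  { apply (cos_bnd_half _ _ _ (934949/2500000) (3739797/10000000)); [lra| apply cos_bnd; [lra|num|num] |lra|lra]. }
  assert (Hs := sin_near x (15/100) (-19/8) (3/40) _ _ Hs0 ltac:(lra)).
  assert (Hc := cos_near x (15/100) (-19/8) (3/40) _ _ Hc0 ltac:(lra)).
  assert (H1 : (-66614967/2000000) <= 3*x^4 - PI^4 <= (-134564619/10000000)) by (apply (p1_neg (-23/10) (-43/20)); [lra|lra|num|num]).
  assert (H2 : (45795877/10000000) <= PI^2 - x^2 <= (26235753/5000000)) by (apply (q_neg (-23/10) (-43/20)); [lra|lra|num|num]).
  apply (G_final (15/100) x (-66614967/2000000) (-134564619/10000000) (45795877/10000000) (26235753/5000000) (-23/10) (-43/20) ((-6936851/10000000) - (3/40)) ((-138737/200000) + (3/40)) ((-3601393/5000000) - (3/40)) ((-7202783/10000000) + (3/40)) (41945247/2000000) (55065179/2000000) (-633249559/10000000) (-90182281/2000000) (264887289/10000000) (139486061/5000000)); try assumption; try lra; try num; repeat split; num.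
Qed.

Lemma IA3 : forall x, (-43/20) <= x <= (-39/20) -> Gf (15/100) x < 0.
Proof.
  intros x Hx.
  assert (Hs0 : (-1616993/2000000) <= sin (-11/5) <= (-2021241/2500000)) by (apply sin_bnd_neg; [lra|num|num]).
  assert (Hc0 : (-1471253/2500000) <= cos (-11/5) <= (-5885009/10000000)).
  { apply (cos_bnd_half _ _ _ (4535961/10000000) (2267981/5000000)); [lra| apply cos_bnd; [lra|num|num] |lra|lra]. }
  assert (Hs := sin_near x (15/100) (-11/5) (1/10) _ _ Hs0 ltac:(lra)).
  assert (Hc := cos_near x (15/100) (-11/5) (1/10) _ _ Hc0 ltac:(lra)).
  assert (H1 : (-108065967/2000000) <= 3*x^4 - PI^4 <= (-333062431/10000000)) by (apply (p1_neg (-43/20) (-39/20)); [lra|lra|num|num]).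
  assert (H2 : (52470877/10000000) <= PI^2 - x^2 <= (30335753/5000000)) by (apply (q_neg (-43/20) (-39/20)); [lra|lra|num|num]).
  apply (G_final (15/100) x (-108065967/2000000) (-333062431/10000000) (52470877/10000000) (30335753/5000000) (-43/20) (-39/20) ((-1616993/2000000) - (1/10)) ((-2021241/2500000) + (1/10)) ((-1471253/2500000) - (1/10)) ((-5885009/10000000) + (1/10)) (275319293/10000000) (73620633/2000000) (-158284361/2000000) (-536872621/10000000) (18600887/500000) (380372319/10000000)); try assumption; try lra; try num; repeat split; num.
Qed.

Lemma IA4 : forall x, (-39/20) <= x <= (-33/20) -> Gf (15/100) x < 0.
Proof.
  intros x Hx.
  assert (Hs0 : (-4644799/5000000) <= sin (-39/20) <= (-9289597/10000000)) by (apply sin_bnd_neg; [lra|num|num]).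
  assert (Hc0 : (-3701809/10000000) <= cos (-39/20) <= (-231363/625000)) by (apply cos_bnd; [lra|num|num]).
  assert (Hs := sin_near x (15/100) (-39/20) (15/100) _ _ Hs0 ltac:(lra)).
  assert (Hc := cos_near x (15/100) (-39/20) (15/100) _ _ Hc0 ltac:(lra)).
  assert (H1 : (-150347967/2000000) <= 3*x^4 - PI^4 <= (-540317431/10000000)) by (apply (p1_neg (-39/20) (-33/20)); [lra|lra|num|num]).
  assert (H2 : (60670877/10000000) <= PI^2 - x^2 <= (35735753/5000000)) by (apply (q_neg (-39/20) (-33/20)); [lra|lra|num|num]).
  apply (G_final (15/100) x (-150347967/2000000) (-540317431/10000000) (60670877/10000000) (35735753/5000000) (-39/20) (-33/20) ((-4644799/5000000) - (15/100)) ((-9289597/10000000) + (15/100)) ((-3701809/10000000) - (15/100)) ((-231363/625000) + (15/100)) (368095531/10000000) (510817617/10000000) (-498047177/5000000) (-303678813/5000000) (6110011/156250) (236553557/5000000)); try assumption; try lra; try num; repeat split; num.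
Qed.

Lemma IA5 : forall x, (-33/20) <= x <= (-23/20) -> Gf (15/100) x < 0.
Proof.
  intros x Hx.
  assert (Hs0 : (-4998919/5000000) <= sin (-31/20) <= (-9997837/10000000)) by (apply sin_bnd_neg; [lra|num|num]).
  assert (Hc0 : (51987/2500000) <= cos (-31/20) <= (207949/10000000)) by (apply cos_bnd; [lra|num|num]).
  assert (Hs := sin_near x (15/100) (-31/20) (1/4) _ _ Hs0 ltac:(lra)).
  assert (Hc := cos_near x (15/100) (-31/20) (1/4) _ _ Hc0 ltac:(lra)).
  assert (H1 : (-184325967/2000000) <= 3*x^4 - PI^4 <= (-751727431/10000000)) by (apply (p1_neg (-33/20) (-23/20)); [lra|lra|num|num]).
  assert (H2 : (71470877/10000000) <= PI^2 - x^2 <= (42735753/5000000)) by (apply (q_neg (-33/20) (-23/20)); [lra|lra|num|num]).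
  apply (G_final (15/100) x (-184325967/2000000) (-751727431/10000000) (71470877/10000000) (42735753/5000000) (-33/20) (-23/20) ((-4998919/5000000) - (1/4)) ((-9997837/10000000) + (1/4)) ((51987/2500000) - (1/4)) ((207949/10000000) + (1/4)) (4086469/80000) (365268917/5000000) (-1205387427/10000000) (-293714959/5000000) (211242351/10000000) (440445377/10000000)); try assumption; try lra; try num; repeat split; num.
Qed.

Lemma IA6 : forall x, (-23/20) <= x <= (-3/20) -> Gf (15/100) x < 0.
Proof.
  intros x Hx.
  assert (Hs0 : (-7173561/10000000) <= sin (-4/5) <= (-179339/250000)) by (apply sin_bnd_neg; [lra|num|num]).
  assert (Hc0 : (6967067/10000000) <= cos (-4/5) <= (1741767/2500000)) by (apply cos_bnd; [lra|num|num]).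
  assert (Hs := sin_near x (15/100) (-4/5) (1/2) _ _ Hs0 ltac:(lra)).
  assert (Hc := cos_near x (15/100) (-4/5) (1/2) _ _ Hc0 ltac:(lra)).
  assert (H1 : (-194816967/2000000) <= 3*x^4 - PI^4 <= (-921617431/10000000)) by (apply (p1_neg (-23/20) (-3/20)); [lra|lra|num|num]).
  assert (H2 : (85470877/10000000) <= PI^2 - x^2 <= (49235753/5000000)) by (apply (q_neg (-23/20) (-3/20)); [lra|lra|num|num]).
  apply (G_final (15/100) x (-194816967/2000000) (-921617431/10000000) (85470877/10000000) (49235753/5000000) (-23/20) (-3/20) ((-7173561/10000000) - (1/2)) ((-179339/250000) + (1/2)) ((6967067/10000000) - (1/2)) ((1741767/2500000) + (1/2)) (730527081/10000000) (775731/8000) (-1115113313/10000000) (-54789531/5000000) (-181288323/10000000) (11908833/5000000)); try assumption; try lra; try num; repeat split; num.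
Qed.

Lemma IA7 : forall x, (-3/20) <= x <= (0) -> Gf (15/100) x < 0.
Proof.
  intros x Hx.
  assert (Hs0 : (-278883/1250000) <= sin (-9/40) <= (-2231063/10000000)) by (apply sin_bnd_neg; [lra|num|num]).
  assert (Hc0 : (9747941/10000000) <= cos (-9/40) <= (4873971/5000000)) by (apply cos_bnd; [lra|num|num]).
  assert (Hs := sin_near x (15/100) (-9/40) (3/40) _ _ Hs0 ltac:(lra)).
  assert (Hc := cos_near x (15/100) (-9/40) (3/40) _ _ Hc0 ltac:(lra)).
  assert (H1 : (-487050011/5000000) <= 3*x^4 - PI^4 <= (-974072431/10000000)) by (apply (p1_neg (-3/20) (0)); [lra|lra|num|num]).
  assert (H2 : (98470877/10000000) <= PI^2 - x^2 <= (49348253/5000000)) by (apply (q_neg (-3/20) (0)); [lra|lra|num|num]).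
  apply (G_final (15/100) x (-487050011/5000000) (-974072431/10000000) (98470877/10000000) (49348253/5000000) (-3/20) (0) ((-278883/1250000) - (3/40)) ((-2231063/10000000) + (3/40)) ((9747941/10000000) - (3/40)) ((4873971/5000000) + (3/40)) (969651361/10000000) (97410003/1000000) (-29223001/2000000) (0) (-438232313/5000000) (0)); try assumption; try lra; try num; repeat split; num.
Qed.

Lemma IA8 : forall x, (0) <= x <= (1) -> Gf (15/100) x < 0.
Proof.
  intros x Hx.
  assert (Hs0 : (1714489/5000000) <= sin (7/20) <= (3428979/10000000)) by (apply sin_bnd; [lra|num|num]).
  assert (Hc0 : (9393727/10000000) <= cos (7/20) <= (146777/156250)) by (apply cos_bnd; [lra|num|num]).
  assert (Hs := sin_near x (15/100) (7/20) (1/2) _ _ Hs0 ltac:(lra)).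
  assert (Hc := cos_near x (15/100) (7/20) (1/2) _ _ Hc0 ltac:(lra)).
  assert (H1 : (-487050011/5000000) <= 3*x^4 - PI^4 <= (-944087619/10000000)) by (apply (p1_pos (0) (1)); [lra|lra|num|num]).
  assert (H2 : (88695877/10000000) <= PI^2 - x^2 <= (49348253/5000000)) by (apply (q_pos (0) (1)); [lra|lra|num|num]).
  apply (G_final (15/100) x (-487050011/5000000) (-944087619/10000000) (88695877/10000000) (49348253/5000000) (0) (1) ((1714489/5000000) - (1/2)) ((3428979/10000000) + (1/2)) ((9393727/10000000) - (1/2)) ((146777/156250) + (1/2)) (786695859/10000000) (97410003/1000000) (0) (97410003/1000000) (-207403163/5000000) (-76516629/5000000)); try assumption; try lra; try num; repeat split; num.
Qed.

Lemma IA9 : forall x, (1) <= x <= (3/2) -> Gf (15/100) x < 0.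
Proof.
  intros x Hx.
  assert (Hs0 : (8912073/10000000) <= sin (11/10) <= (4456037/5000000)) by (apply sin_bnd; [lra|num|num]).
  assert (Hc0 : (4535961/10000000) <= cos (11/10) <= (2267981/5000000)) by (apply cos_bnd; [lra|num|num]).
  assert (Hs := sin_near x (15/100) (11/10) (1/4) _ _ Hs0 ltac:(lra)).
  assert (Hc := cos_near x (15/100) (11/10) (1/4) _ _ Hc0 ltac:(lra)).
  assert (H1 : (-472050011/5000000) <= 3*x^4 - PI^4 <= (-822212619/10000000)) by (apply (p1_pos (1) (3/2)); [lra|lra|num|num]).
  assert (H2 : (76195877/10000000) <= PI^2 - x^2 <= (44348253/5000000)) by (apply (q_pos (1) (3/2)); [lra|lra|num|num]).
  apply (G_final (15/100) x (-472050011/5000000) (-822212619/10000000) (76195877/10000000) (44348253/5000000) (1) (3/2) ((8912073/10000000) - (1/4)) ((4456037/5000000) + (1/4)) ((4535961/10000000) - (1/4)) ((2267981/5000000) + (1/4)) (580581167/10000000) (393353509/5000000) (580581167/10000000) (1180060527/10000000) (-83699641/5000000) (186136441/5000000)); try assumption; try lra; try num; repeat split; num.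
Qed.

Lemma IA10 : forall x, (3/2) <= x <= (2) -> Gf (15/100) x < 0.
Proof.
  intros x Hx.
  assert (Hs0 : (1249467/1250000) <= sin (8/5) <= (9995737/10000000)) by (apply sin_bnd; [lra|num|num]).
  assert (Hc0 : (-72999/2500000) <= cos (8/5) <= (-58399/2000000)) by (apply cos_bnd; [lra|num|num]).
  assert (Hs := sin_near x (15/100) (8/5) (1/4) _ _ Hs0 ltac:(lra)).
  assert (Hc := cos_near x (15/100) (8/5) (1/4) _ _ Hc0 ltac:(lra)).
  assert (H1 : (-411112511/5000000) <= 3*x^4 - PI^4 <= (-494087619/10000000)) by (apply (p1_pos (3/2) (2)); [lra|lra|num|num]).
  assert (H2 : (58695877/10000000) <= PI^2 - x^2 <= (38098253/5000000)) by (apply (q_pos (3/2) (2)); [lra|lra|num|num]).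
  apply (G_final (15/100) x (-411112511/5000000) (-494087619/10000000) (58695877/10000000) (38098253/5000000) (3/2) (2) ((1249467/1250000) - (1/4)) ((9995737/10000000) + (1/4)) ((-72999/2500000) - (1/4)) ((-58399/2000000) + (1/4)) (344520597/10000000) (580590753/10000000) (103356179/2000000) (580590753/5000000) (114782449/5000000) (77473063/2000000)); try assumption; try lra; try num; repeat split; num.
Qed.

Lemma IA11 : forall x, (2) <= x <= (23/10) -> Gf (15/100) x < 0.
Proof.
  intros x Hx.
  assert (Hs0 : (4546487/5000000) <= sin (2) <= (363719/400000)) by (apply sin_bnd; [lra|num|num]).
  assert (Hc0 : (-4161469/10000000) <= cos (2) <= (-1040367/2500000)) by (apply cos_bnd; [lra|num|num]).
  assert (Hs := sin_near x (15/100) (2) (15/100) _ _ Hs0 ltac:(lra)).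
  assert (Hc := cos_near x (15/100) (2) (15/100) _ _ Hc0 ltac:(lra)).
  assert (H1 : (-247050011/5000000) <= 3*x^4 - PI^4 <= (-134564619/10000000)) by (apply (p1_pos (2) (23/10)); [lra|lra|num|num]).
  assert (H2 : (45795877/10000000) <= PI^2 - x^2 <= (29348253/5000000)) by (apply (q_pos (2) (23/10)); [lra|lra|num|num]).
  apply (G_final (15/100) x (-247050011/5000000) (-134564619/10000000) (45795877/10000000) (29348253/5000000) (2) (23/10) ((4546487/5000000) - (15/100)) ((363719/400000) + (15/100)) ((-4161469/10000000) - (15/100)) ((-1040367/2500000) + (15/100)) (41945247/2000000) (172263991/5000000) (41945247/1000000) (792414359/10000000) (69933299/2500000) (318489169/10000000)); try assumption; try lra; try num; repeat split; num.
Qed.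

Lemma IA12 : forall x, (23/10) <= x <= (13/5) -> Gf (15/100) x < 0.
Proof.
  intros x Hx.
  assert (Hs0 : (1864263/2500000) <= sin (23/10) <= (7457053/10000000)) by (apply sin_bnd; [lra|num|num]).
  assert (Hc0 : (-6662761/10000000) <= cos (23/10) <= (-6662759/10000000)).
  { apply (cos_bnd_half _ _ _ (2042437/5000000) (32679/80000)); [lra| apply cos_bnd; [lra|num|num] |lra|lra]. }
  assert (Hs := sin_near x (15/100) (23/10) (15/100) _ _ Hs0 ltac:(lra)).
  assert (Hc := cos_near x (15/100) (23/10) (15/100) _ _ Hc0 ltac:(lra)).
  assert (H1 : (-67288511/5000000) <= 3*x^4 - PI^4 <= (396840381/10000000)) by (apply (p1_pos (23/10) (13/5)); [lra|lra|num|num]).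
  assert (H2 : (31095877/10000000) <= PI^2 - x^2 <= (22898253/5000000)) by (apply (q_pos (23/10) (13/5)); [lra|lra|num|num]).
  apply (G_final (15/100) x (-67288511/5000000) (396840381/10000000) (31095877/10000000) (22898253/5000000) (23/10) (13/5) ((1864263/2500000) - (15/100)) ((7457053/10000000) + (15/100)) ((-6662761/10000000) - (15/100)) ((-6662759/10000000) + (15/100)) (24173839/2500000) (209731997/10000000) (111199659/5000000) (545303193/10000000) (109852007/10000000) (13248443/1000000)); try assumption; try lra; try num; repeat split; num.
Qed.

Lemma IA13 : forall x, (13/5) <= x <= (3) -> Gf (15/100) x < 0.
Proof.
  intros x Hx.
  assert (Hs0 : (295019/625000) <= sin (53/20) <= (2360153/5000000)) by (apply sin_bnd; [lra|num|num]).
  assert (Hc0 : (-8815823/10000000) <= cos (53/20) <= (-8815821/10000000)).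
  { apply (cos_bnd_half _ _ _ (2433287/10000000) (304161/1250000)); [lra| apply cos_bnd; [lra|num|num] |lra|lra]. }
  assert (Hs := sin_near x (15/100) (53/20) (1/5) _ _ Hs0 ltac:(lra)).
  assert (Hc := cos_near x (15/100) (53/20) (1/5) _ _ Hc0 ltac:(lra)).
  assert (H1 : (198413989/5000000) <= 3*x^4 - PI^4 <= (1455912381/10000000)) by (apply (p1_pos (13/5) (3)); [lra|lra|num|num]).
  assert (H2 : (8695877/10000000) <= PI^2 - x^2 <= (15548253/5000000)) by (apply (q_pos (13/5) (3)); [lra|lra|num|num]).
  apply (G_final (15/100) x (198413989/5000000) (1455912381/10000000) (8695877/10000000) (15548253/5000000) (13/5) (3) ((295019/625000) - (1/5)) ((2360153/5000000) + (1/5)) ((-8815823/10000000) - (1/5)) ((-8815821/10000000) + (1/5)) (7561827/10000000) (96699269/10000000) (78643/40000) (290097807/10000000) (-135235423/5000000) (5348321/10000000)); try assumption; try lra; try num; repeat split; num.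
Qed.

Lemma IB0 : forall x, (-53/20) <= x <= (-49/20) -> Gf (45/100) x < 0.
Proof.
  intros x Hx.
  assert (Hs0 : (-1411201/10000000) <= sin (-3) <= (-352799/2500000)) by (apply sin_bnd_neg; [lra|num|num]).
  assert (Hc0 : (-395997/400000) <= cos (-3) <= (-2474981/2500000)).
  { apply (cos_bnd_half _ _ _ (176843/2500000) (707373/10000000)); [lra| apply cos_bnd; [lra|num|num] |lra|lra]. }
  assert (Hs := sin_near x (45/100) (-3) (1/10) _ _ Hs0 ltac:(lra)).
  assert (Hc := cos_near x (45/100) (-3) (1/10) _ _ Hc0 ltac:(lra)).
  assert (H1 : (21360033/2000000) <= 3*x^4 - PI^4 <= (505377569/10000000)) by (apply (p1_neg (-53/20) (-49/20)); [lra|lra|num|num]).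
  assert (H2 : (28470877/10000000) <= PI^2 - x^2 <= (19335753/5000000)) by (apply (q_neg (-53/20) (-49/20)); [lra|lra|num|num]).
  apply (G_final (45/100) x (21360033/2000000) (505377569/10000000) (28470877/10000000) (19335753/5000000) (-53/20) (-49/20) ((-1411201/10000000) - (1/10)) ((-352799/2500000) + (1/10)) ((-395997/400000) - (1/10)) ((-2474981/2500000) + (1/10)) (81059083/10000000) (74774269/5000000) (-198151813/5000000) (-198594753/10000000) (-19010267/2000000) (1020767/1250000)); try assumption; try lra; try num; repeat split; num.
Qed.

Lemma IB1 : forall x, (-49/20) <= x <= (-47/20) -> Gf (45/100) x < 0.
Proof.
  intros x Hx.
  assert (Hs0 : (-2874781/10000000) <= sin (-57/20) <= (-1437389/5000000)) by (apply sin_bnd_neg; [lra|num|num]).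
  assert (Hc0 : (-9577873/10000000) <= cos (-57/20) <= (-598617/625000)).
  { apply (cos_bnd_half _ _ _ (1452803/10000000) (363201/2500000)); [lra| apply cos_bnd; [lra|num|num] |lra|lra]. }
  assert (Hs := sin_near x (45/100) (-57/20) (1/20) _ _ Hs0 ltac:(lra)).
  assert (Hc := cos_near x (45/100) (-57/20) (1/20) _ _ Hc0 ltac:(lra)).
  assert (H1 : (-11831967/2000000) <= 3*x^4 - PI^4 <= (106812569/10000000)) by (apply (p1_neg (-49/20) (-47/20)); [lra|lra|num|num]).
  assert (H2 : (38670877/10000000) <= PI^2 - x^2 <= (21735753/5000000)) by (apply (q_neg (-49/20) (-47/20)); [lra|lra|num|num]).
  apply (G_final (45/100) x (-11831967/2000000) (106812569/10000000) (38670877/10000000) (21735753/5000000) (-49/20) (-47/20) ((-2874781/10000000) - (1/20)) ((-1437389/5000000) + (1/20)) ((-9577873/10000000) - (1/20)) ((-598617/625000) + (1/20)) (18692959/1250000) (5905537/312500) (-462994101/10000000) (-351427629/10000000) (59620531/10000000) (4172813/500000)); try assumption; try lra; try num; repeat split; num.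
Qed.

Lemma IB2 : forall x, (-47/20) <= x <= (-23/10) -> Gf (45/100) x < 0.
Proof.
  intros x Hx.
  assert (Hs0 : (-1792183/5000000) <= sin (-111/40) <= (-896091/2500000)) by (apply sin_bnd_neg; [lra|num|num]).
  assert (Hc0 : (-4667771/5000000) <= cos (-111/40) <= (-466777/500000)).
  { apply (cos_bnd_half _ _ _ (455679/2500000) (1822717/10000000)); [lra| apply cos_bnd; [lra|num|num] |lra|lra]. }
  assert (Hs := sin_near x (45/100) (-111/40) (1/40) _ _ Hs0 ltac:(lra)).
  assert (Hc := cos_near x (45/100) (-111/40) (1/40) _ _ Hc0 ltac:(lra)).
  assert (H1 : (-67288511/5000000) <= 3*x^4 - PI^4 <= (-59147431/10000000)) by (apply (p1_neg (-47/20) (-23/10)); [lra|lra|num|num]).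
  assert (H2 : (43470877/10000000) <= PI^2 - x^2 <= (22898253/5000000)) by (apply (q_neg (-47/20) (-23/10)); [lra|lra|num|num]).
  apply (G_final (45/100) x (-67288511/5000000) (-59147431/10000000) (43470877/10000000) (22898253/5000000) (-47/20) (-23/10) ((-1792183/5000000) - (1/40)) ((-896091/2500000) + (1/40)) ((-4667771/5000000) - (1/40)) ((-466777/500000) + (1/40)) (94485857/5000000) (209731997/10000000) (-492870193/10000000) (-217317471/5000000) (12899937/1000000) (14492311/1000000)); try assumption; try lra; try num; repeat split; num.
Qed.

Lemma IB3 : forall x, (-23/10) <= x <= (-227/100) -> Gf (45/100) x < 0.
Proof.
  intros x Hx.
  assert (Hs0 : (-3954821/10000000) <= sin (-547/200) <= (-3954819/10000000)) by (apply sin_bnd_neg; [lra|num|num]).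
  assert (Hc0 : (-4592369/5000000) <= cos (-547/200) <= (-287023/312500)).
  { apply (cos_bnd_half _ _ _ (504747/2500000) (2018989/10000000)); [lra| apply cos_bnd; [lra|num|num] |lra|lra]. }
  assert (Hs := sin_near x (45/100) (-547/200) (3/200) _ _ Hs0 ltac:(lra)).
  assert (Hc := cos_near x (45/100) (-547/200) (3/200) _ _ Hc0 ltac:(lra)).
  assert (H1 : (-17752867/1000000) <= 3*x^4 - PI^4 <= (-134564619/10000000)) by (apply (p1_neg (-23/10) (-227/100)); [lra|lra|num|num]).
  assert (H2 : (45795877/10000000) <= PI^2 - x^2 <= (23583753/5000000)) by (apply (q_neg (-23/10) (-227/100)); [lra|lra|num|num]).
  apply (G_final (45/100) x (-17752867/1000000) (-134564619/10000000) (45795877/10000000) (23583753/5000000) (-23/10) (-227/100) ((-3954821/10000000) - (3/200)) ((-3954819/10000000) + (3/200)) ((-4592369/5000000) - (3/200)) ((-287023/312500) + (3/200)) (41945247/2000000) (222477363/10000000) (-102339587/2000000) (-476078553/10000000) (165718363/10000000) (22642409/1250000)); try assumption; try lra; try num; repeat split; num.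
Qed.

Lemma IB4 : forall x, (-227/100) <= x <= (-56/25) -> Gf (45/100) x < 0.
Proof.
  intros x Hx.
  assert (Hs0 : (-2114271/5000000) <= sin (-541/200) <= (-4228541/10000000)) by (apply sin_bnd_neg; [lra|num|num]).
  assert (Hc0 : (-9061979/10000000) <= cos (-541/200) <= (-9061977/10000000)).
  { apply (cos_bnd_half _ _ _ (1082833/5000000) (2165667/10000000)); [lra| apply cos_bnd; [lra|num|num] |lra|lra]. }
  assert (Hs := sin_near x (45/100) (-541/200) (3/200) _ _ Hs0 ltac:(lra)).
  assert (Hc := cos_near x (45/100) (-541/200) (3/200) _ _ Hc0 ltac:(lra)).
  assert (H1 : (-218810729/10000000) <= 3*x^4 - PI^4 <= (-88758133/5000000)) by (apply (p1_neg (-227/100) (-56/25)); [lra|lra|num|num]).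
  assert (H2 : (47166877/10000000) <= PI^2 - x^2 <= (24260253/5000000)) by (apply (q_neg (-227/100) (-56/25)); [lra|lra|num|num]).
  apply (G_final (45/100) x (-218810729/10000000) (-88758133/5000000) (47166877/10000000) (24260253/5000000) (-227/100) (-56/25) ((-2114271/5000000) - (3/200)) ((-4228541/10000000) + (3/200)) ((-9061979/10000000) - (3/200)) ((-9061977/10000000) + (3/200)) (55617857/2500000) (235423951/10000000) (-534412369/10000000) (-249167999/5000000) (40313597/2000000) (203248379/10000000)); try assumption; try lra; try num; repeat split; num.
Qed.

Lemma IB5 : forall x, (-56/25) <= x <= (-111/50) -> Gf (45/100) x < 0.
Proof.
  intros x Hx.
  assert (Hs0 : (-4453747/10000000) <= sin (-67/25) <= (-890749/2000000)) by (apply sin_bnd_neg; [lra|num|num]).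
  assert (Hc0 : (-2238361/2500000) <= cos (-67/25) <= (-4476721/5000000)).
  { apply (cos_bnd_half _ _ _ (285941/1250000) (2287529/10000000)); [lra| apply cos_bnd; [lra|num|num] |lra|lra]. }
  assert (Hs := sin_near x (45/100) (-67/25) (1/100) _ _ Hs0 ltac:(lra)).
  assert (Hc := cos_near x (45/100) (-67/25) (1/100) _ _ Hc0 ltac:(lra)).
  assert (H1 : (-9817049/400000) <= 3*x^4 - PI^4 <= (-109399163/5000000)) by (apply (p1_neg (-56/25) (-111/50)); [lra|lra|num|num]).
  assert (H2 : (48519877/10000000) <= PI^2 - x^2 <= (24706253/5000000)) by (apply (q_neg (-56/25) (-111/50)); [lra|lra|num|num]).
  apply (G_final (45/100) x (-9817049/400000) (-109399163/5000000) (48519877/10000000) (24706253/5000000) (-56/25) (-111/50) ((-4453747/10000000) - (1/100)) ((-890749/2000000) + (1/100)) ((-2238361/2500000) - (1/100)) ((-4476721/5000000) + (1/100)) (117708923/5000000) (9766383/400000) (-68364681/1250000) (-261313809/5000000) (222195259/10000000) (227538737/10000000)); try assumption; try lra; try num; repeat split; num.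
Qed.

Lemma IB6 : forall x, (-111/50) <= x <= (-441/200) -> Gf (45/100) x < 0.
Proof.
  intros x Hx.
  assert (Hs0 : (-2304871/5000000) <= sin (-213/80) <= (-4609741/10000000)) by (apply sin_bnd_neg; [lra|num|num]).
  assert (Hc0 : (-1109267/1250000) <= cos (-213/80) <= (-4437067/5000000)).
  { apply (cos_bnd_half _ _ _ (2372619/10000000) (118631/500000)); [lra| apply cos_bnd; [lra|num|num] |lra|lra]. }
  assert (Hs := sin_near x (45/100) (-213/80) (3/400) _ _ Hs0 ltac:(lra)).
  assert (Hc := cos_near x (45/100) (-213/80) (3/400) _ _ Hc0 ltac:(lra)).
  assert (H1 : (-264921409/10000000) <= 3*x^4 - PI^4 <= (-122706911/5000000)) by (apply (p1_neg (-111/50) (-441/200)); [lra|lra|num|num]).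
  assert (H2 : (49411877/10000000) <= PI^2 - x^2 <= (1564883/312500)) by (apply (q_neg (-111/50) (-441/200)); [lra|lra|num|num]).
  apply (G_final (45/100) x (-264921409/10000000) (-122706911/5000000) (49411877/10000000) (1564883/312500) (-111/50) (-441/200) ((-2304871/5000000) - (3/400)) ((-4609741/10000000) + (3/400)) ((-1109267/1250000) - (3/400)) ((-4437067/5000000) + (3/400)) (122076679/5000000) (125381571/5000000) (-17396693/312500) (-269179077/5000000) (59270443/2500000) (244131479/10000000)); try assumption; try lra; try num; repeat split; num.
Qed.

Lemma IB7 : forall x, (-441/200) <= x <= (-219/100) -> Gf (45/100) x < 0.
Proof.
  intros x Hx.
  assert (Hs0 : (-4742331/10000000) <= sin (-1059/400) <= (-4742329/10000000)) by (apply sin_bnd_neg; [lra|num|num]).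
  assert (Hc0 : (-4401997/5000000) <= cos (-1059/400) <= (-8803993/10000000)).
  { apply (cos_bnd_half _ _ _ (244541/1000000) (2445411/10000000)); [lra| apply cos_bnd; [lra|num|num] |lra|lra]. }
  assert (Hs := sin_near x (45/100) (-1059/400) (3/400) _ _ Hs0 ltac:(lra)).
  assert (Hc := cos_near x (45/100) (-1059/400) (3/400) _ _ Hc0 ltac:(lra)).
  assert (H1 : (-142011383/5000000) <= 3*x^4 - PI^4 <= (-132454503/5000000)) by (apply (p1_neg (-441/200) (-219/100)); [lra|lra|num|num]).
  assert (H2 : (50075627/10000000) <= PI^2 - x^2 <= (25367753/5000000)) by (apply (q_neg (-441/200) (-219/100)); [lra|lra|num|num]).
  apply (G_final (45/100) x (-142011383/5000000) (-132454503/5000000) (50075627/10000000) (25367753/5000000) (-441/200) (-219/100) ((-4742331/10000000) - (3/400)) ((-4742329/10000000) + (3/400)) ((-4401997/5000000) - (3/400)) ((-8803993/10000000) + (3/400)) (250756841/10000000) (257409157/10000000) (-70948399/1250000) (-549157481/10000000) (63045911/2500000) (256309863/10000000)); try assumption; try lra; try num; repeat split; num.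
Qed.

Lemma IB8 : forall x, (-219/100) <= x <= (-87/40) -> Gf (45/100) x < 0.
Proof.
  intros x Hx.
  assert (Hs0 : (-1218463/2500000) <= sin (-1053/400) <= (-4873851/10000000)) by (apply sin_bnd_neg; [lra|num|num]).
  assert (Hc0 : (-272871/312500) <= cos (-1053/400) <= (-873187/1000000)).
  { apply (cos_bnd_half _ _ _ (2518063/10000000) (157379/625000)); [lra| apply cos_bnd; [lra|num|num] |lra|lra]. }
  assert (Hs := sin_near x (45/100) (-1053/400) (3/400) _ _ Hs0 ltac:(lra)).
  assert (Hc := cos_near x (45/100) (-1053/400) (3/400) _ _ Hc0 ltac:(lra)).
  assert (H1 : (-75683909/2500000) <= 3*x^4 - PI^4 <= (-142005181/5000000)) by (apply (p1_neg (-219/100) (-87/40)); [lra|lra|num|num]).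
  assert (H2 : (50734877/10000000) <= PI^2 - x^2 <= (3211891/625000)) by (apply (q_neg (-219/100) (-87/40)); [lra|lra|num|num]).
  apply (G_final (45/100) x (-75683909/2500000) (-142005181/5000000) (50734877/10000000) (3211891/625000) (-219/100) (-87/40) ((-1218463/2500000) - (3/400)) ((-4873851/10000000) + (3/400)) ((-272871/312500) - (3/400)) ((-873187/1000000) + (3/400)) (128701387/5000000) (132047921/5000000) (-289184947/5000000) (-559851033/10000000) (1333077/50000) (33583021/1250000)); try assumption; try lra; try num; repeat split; num.
Qed.

Lemma IB9 : forall x, (-87/40) <= x <= (-433/200) -> Gf (45/100) x < 0.
Proof.
  intros x Hx.
  assert (Hs0 : (-4982617/10000000) <= sin (-131/50) <= (-622827/1250000)) by (apply sin_bnd_neg; [lra|num|num]).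
  assert (Hc0 : (-2167567/2500000) <= cos (-131/50) <= (-4335133/5000000)).
  { apply (cos_bnd_half _ _ _ (5157/20000) (2578501/10000000)); [lra| apply cos_bnd; [lra|num|num] |lra|lra]. }
  assert (Hs := sin_near x (45/100) (-131/50) (1/200) _ _ Hs0 ltac:(lra)).
  assert (Hc := cos_near x (45/100) (-131/50) (1/200) _ _ Hc0 ltac:(lra)).
  assert (H1 : (-78749419/2500000) <= 3*x^4 - PI^4 <= (-9460101/312500)) by (apply (p1_neg (-87/40) (-433/200)); [lra|lra|num|num]).
  assert (H2 : (51389627/10000000) <= PI^2 - x^2 <= (404877/78125)) by (apply (q_neg (-87/40) (-433/200)); [lra|lra|num|num]).
  apply (G_final (45/100) x (-78749419/2500000) (-9460101/312500) (51389627/10000000) (404877/78125) (-87/40) (-433/200) ((-4982617/10000000) - (1/200)) ((-622827/1250000) + (1/200)) ((-2167567/2500000) - (1/200)) ((-4335133/5000000) + (1/200)) (8252793/312500) (268575351/10000000) (-584151389/10000000) (-571753499/10000000) (17167901/625000) (56404809/2000000)); try assumption; try lra; try num; repeat split; num.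
Qed.

Lemma IB10 : forall x, (-433/200) <= x <= (-431/200) -> Gf (45/100) x < 0.
Proof.
  intros x Hx.
  assert (Hs0 : (-5069069/10000000) <= sin (-261/100) <= (-1267267/2500000)) by (apply sin_bnd_neg; [lra|num|num]).
  assert (Hc0 : (-8620009/10000000) <= cos (-261/100) <= (-8620007/10000000)).
  { apply (cos_bnd_half _ _ _ (2626777/10000000) (1313389/5000000)); [lra| apply cos_bnd; [lra|num|num] |lra|lra]. }
  assert (Hs := sin_near x (45/100) (-261/100) (1/200) _ _ Hs0 ltac:(lra)).
  assert (Hc := cos_near x (45/100) (-261/100) (1/200) _ _ Hc0 ltac:(lra)).
  assert (H1 : (-10221593/312500) <= 3*x^4 - PI^4 <= (-314985273/10000000)) by (apply (p1_neg (-433/200) (-431/200)); [lra|lra|num|num]).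
  assert (H2 : (51823627/10000000) <= PI^2 - x^2 <= (408252/78125)) by (apply (q_neg (-433/200) (-431/200)); [lra|lra|num|num]).
  apply (G_final (45/100) x (-10221593/312500) (-314985273/10000000) (51823627/10000000) (408252/78125) (-433/200) (-431/200) ((-5069069/10000000) - (1/200)) ((-1267267/2500000) + (1/200)) ((-8620009/10000000) - (1/200)) ((-8620007/10000000) + (1/200)) (268568831/10000000) (27307163/1000000) (-591200079/10000000) (-57876583/1000000) (283588171/10000000) (58097301/2000000)); try assumption; try lra; try num; repeat split; num.
Qed.

Lemma IB11 : forall x, (-431/200) <= x <= (-429/200) -> Gf (45/100) x < 0.
Proof.
  intros x Hx.
  assert (Hs0 : (-2577507/5000000) <= sin (-13/5) <= (-5155013/10000000)) by (apply sin_bnd_neg; [lra|num|num]).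
  assert (Hc0 : (-1071111/1250000) <= cos (-13/5) <= (-4284443/5000000)).
  { apply (cos_bnd_half _ _ _ (668747/2500000) (2674989/10000000)); [lra| apply cos_bnd; [lra|num|num] |lra|lra]. }
  assert (Hs := sin_near x (45/100) (-13/5) (1/200) _ _ Hs0 ltac:(lra)).
  assert (Hc := cos_near x (45/100) (-13/5) (1/200) _ _ Hc0 ltac:(lra)).
  assert (H1 : (-339017091/10000000) <= 3*x^4 - PI^4 <= (-327078573/10000000)) by (apply (p1_neg (-431/200) (-429/200)); [lra|lra|num|num]).
  assert (H2 : (52255627/10000000) <= PI^2 - x^2 <= (3292891/625000)) by (apply (q_neg (-431/200) (-429/200)); [lra|lra|num|num]).
  apply (G_final (45/100) x (-339017091/10000000) (-327078573/10000000) (52255627/10000000) (3292891/625000) (-431/200) (-429/200) ((-2577507/5000000) - (1/200)) ((-5155013/10000000) + (1/200)) ((-1071111/1250000) - (1/200)) ((-4284443/5000000) + (1/200)) (54613011/2000000) (138792079/5000000) (-598193861/10000000) (-292862271/5000000) (146097517/5000000) (14950657/500000)); try assumption; try lra; try num; repeat split; num.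
Qed.

Lemma IB12 : forall x, (-429/200) <= x <= (-427/200) -> Gf (45/100) x < 0.
Proof.
  intros x Hx.
  assert (Hs0 : (-1310111/2500000) <= sin (-259/100) <= (-5240443/10000000)) by (apply sin_bnd_neg; [lra|num|num]).
  assert (Hc0 : (-8516911/10000000) <= cos (-259/100) <= (-8516909/10000000)).
  { apply (cos_bnd_half _ _ _ (680783/2500000) (2723133/10000000)); [lra| apply cos_bnd; [lra|num|num] |lra|lra]. }
  assert (Hs := sin_near x (45/100) (-259/100) (1/200) _ _ Hs0 ltac:(lra)).
  assert (Hc := cos_near x (45/100) (-259/100) (1/200) _ _ Hc0 ltac:(lra)).
  assert (H1 : (-10961799/312500) <= 3*x^4 - PI^4 <= (-339004687/10000000)) by (apply (p1_neg (-429/200) (-427/200)); [lra|lra|num|num]).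
  assert (H2 : (52685627/10000000) <= PI^2 - x^2 <= (3319641/625000)) by (apply (q_neg (-429/200) (-427/200)); [lra|lra|num|num]).
  apply (G_final (45/100) x (-10961799/312500) (-339004687/10000000) (52685627/10000000) (3319641/625000) (-429/200) (-427/200) ((-1310111/2500000) - (1/200)) ((-5240443/10000000) + (1/200)) ((-8516911/10000000) - (1/200)) ((-8516909/10000000) + (1/200)) (277577529/10000000) (14105621/500000) (-605131141/10000000) (-74078503/1250000) (300508021/10000000) (307600197/10000000)); try assumption; try lra; try num; repeat split; num.
Qed.

Lemma IB13 : forall x, (-427/200) <= x <= (-53/25) -> Gf (45/100) x < 0.
Proof.
  intros x Hx.
  assert (Hs0 : (-5346493/10000000) <= sin (-1031/400) <= (-1336623/2500000)) by (apply sin_bnd_neg; [lra|num|num]).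
  assert (Hc0 : (-8450741/10000000) <= cos (-1031/400) <= (-8450739/10000000)).
  { apply (cos_bnd_half _ _ _ (2783217/10000000) (1391609/5000000)); [lra| apply cos_bnd; [lra|num|num] |lra|lra]. }
  assert (Hs := sin_near x (45/100) (-1031/400) (3/400) _ _ Hs0 ltac:(lra)).
  assert (Hc := cos_near x (45/100) (-1031/400) (3/400) _ _ Hc0 ltac:(lra)).
  assert (H1 : (-368111081/10000000) <= 3*x^4 - PI^4 <= (-87691291/2500000)) by (apply (p1_neg (-427/200) (-53/25)); [lra|lra|num|num]).
  assert (H2 : (53113627/10000000) <= PI^2 - x^2 <= (26876253/5000000)) by (apply (q_neg (-427/200) (-53/25)); [lra|lra|num|num]).
  apply (G_final (45/100) x (-368111081/10000000) (-87691291/2500000) (53113627/10000000) (26876253/5000000) (-427/200) (-53/25) ((-5346493/10000000) - (3/400)) ((-1336623/2500000) + (3/400)) ((-8450741/10000000) - (3/400)) ((-8450739/10000000) + (3/400)) (282105737/10000000) (288933191/10000000) (-616872363/10000000) (-299032081/5000000) (156920987/5000000) (78817261/2500000)); try assumption; try lra; try num; repeat split; num.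
Qed.

Lemma IB14 : forall x, (-53/25) <= x <= (-421/200) -> Gf (45/100) x < 0.
Proof.
  intros x Hx.
  assert (Hs0 : (-684081/1250000) <= sin (-41/16) <= (-5472647/10000000)) by (apply sin_bnd_neg; [lra|num|num]).
  assert (Hc0 : (-8369597/10000000) <= cos (-41/16) <= (-1673919/2000000)).
  { apply (cos_bnd_half _ _ _ (1427587/5000000) (114207/400000)); [lra| apply cos_bnd; [lra|num|num] |lra|lra]. }
  assert (Hs := sin_near x (45/100) (-41/16) (3/400) _ _ Hs0 ltac:(lra)).
  assert (Hc := cos_near x (45/100) (-41/16) (3/400) _ _ Hc0 ltac:(lra)).
  assert (H1 : (-192540273/5000000) <= 3*x^4 - PI^4 <= (-184049339/5000000)) by (apply (p1_neg (-53/25) (-421/200)); [lra|lra|num|num]).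
  assert (H2 : (53751877/10000000) <= PI^2 - x^2 <= (3399141/625000)) by (apply (q_neg (-53/25) (-421/200)); [lra|lra|num|num]).
  apply (G_final (45/100) x (-192540273/5000000) (-184049339/5000000) (53751877/10000000) (3399141/625000) (-53/25) (-421/200) ((-684081/1250000) - (3/400)) ((-5472647/10000000) + (3/400)) ((-8369597/10000000) - (3/400)) ((-1673919/2000000) + (3/400)) (72231607/2500000) (59157297/2000000) (-627067349/10000000) (-60819013/1000000) (325185003/10000000) (328279563/10000000)); try assumption; try lra; try num; repeat split; num.
Qed.

Lemma IB15 : forall x, (-421/200) <= x <= (-209/100) -> Gf (45/100) x < 0.
Proof.
  intros x Hx.
  assert (Hs0 : (-1399393/2500000) <= sin (-1019/400) <= (-559757/1000000)) by (apply sin_bnd_neg; [lra|num|num]).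
  assert (Hc0 : (-8286569/10000000) <= cos (-1019/400) <= (-4143283/5000000)).
  { apply (cos_bnd_half _ _ _ (2926971/10000000) (731743/2500000)); [lra| apply cos_bnd; [lra|num|num] |lra|lra]. }
  assert (Hs := sin_near x (45/100) (-1019/400) (3/400) _ _ Hs0 ltac:(lra)).
  assert (Hc := cos_near x (45/100) (-1019/400) (3/400) _ _ Hc0 ltac:(lra)).
  assert (H1 : (-200845547/5000000) <= 3*x^4 - PI^4 <= (-192534071/5000000)) by (apply (p1_neg (-421/200) (-209/100)); [lra|lra|num|num]).
  assert (H2 : (54385627/10000000) <= PI^2 - x^2 <= (27507753/5000000)) by (apply (q_neg (-421/200) (-209/100)); [lra|lra|num|num]).
  apply (G_final (45/100) x (-200845547/5000000) (-192534071/5000000) (54385627/10000000) (27507753/5000000) (-421/200) (-209/100) ((-1399393/2500000) - (3/400)) ((-559757/1000000) + (3/400)) ((-8286569/10000000) - (3/400)) ((-4143283/5000000) + (3/400)) (147889821/5000000) (302670591/10000000) (-127424319/2000000) (-618179451/10000000) (16793839/500000) (341393929/10000000)); try assumption; try lra; try num; repeat split; num.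
Qed.

Lemma IB16 : forall x, (-209/100) <= x <= (-207/100) -> Gf (45/100) x < 0.
Proof.
  intros x Hx.
  assert (Hs0 : (-2870861/5000000) <= sin (-253/100) <= (-5741721/10000000)) by (apply sin_bnd_neg; [lra|num|num]).
  assert (Hc0 : (-8187347/10000000) <= cos (-253/100) <= (-1637469/2000000)).
  { apply (cos_bnd_half _ _ _ (1505263/5000000) (3010527/10000000)); [lra| apply cos_bnd; [lra|num|num] |lra|lra]. }
  assert (Hs := sin_near x (45/100) (-253/100) (1/100) _ _ Hs0 ltac:(lra)).
  assert (Hc := cos_near x (45/100) (-253/100) (1/100) _ _ Hc0 ltac:(lra)).
  assert (H1 : (-211644491/5000000) <= 3*x^4 - PI^4 <= (-40167869/1000000)) by (apply (p1_neg (-209/100) (-207/100)); [lra|lra|num|num]).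
  assert (H2 : (55014877/10000000) <= PI^2 - x^2 <= (27923753/5000000)) by (apply (q_neg (-209/100) (-207/100)); [lra|lra|num|num]).
  apply (G_final (45/100) x (-211644491/5000000) (-40167869/1000000) (55014877/10000000) (27923753/5000000) (-209/100) (-207/100) ((-2870861/5000000) - (1/100)) ((-5741721/10000000) + (1/100)) ((-8187347/10000000) - (1/100)) ((-1637469/2000000) + (1/100)) (302663669/10000000) (311894393/10000000) (-325929641/5000000) (-313256897/5000000) (87698567/2500000) (176730801/5000000)); try assumption; try lra; try num; repeat split; num.
Qed.

Lemma IB17 : forall x, (-207/100) <= x <= (-41/20) -> Gf (45/100) x < 0.
Proof.
  intros x Hx.
  assert (Hs0 : (-590431/1000000) <= sin (-251/100) <= (-5904309/10000000)) by (apply sin_bnd_neg; [lra|num|num]).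
  assert (Hc0 : (-8070883/10000000) <= cos (-251/100) <= (-50443/62500)).
  { apply (cos_bnd_half _ _ _ (621147/2000000) (388217/1250000)); [lra| apply cos_bnd; [lra|num|num] |lra|lra]. }
  assert (Hs := sin_near x (45/100) (-251/100) (1/100) _ _ Hs0 ltac:(lra)).
  assert (Hc := cos_near x (45/100) (-251/100) (1/100) _ _ Hc0 ltac:(lra)).
  assert (H1 : (-88853967/2000000) <= 3*x^4 - PI^4 <= (-211638289/5000000)) by (apply (p1_neg (-207/100) (-41/20)); [lra|lra|num|num]).
  assert (H2 : (55846877/10000000) <= PI^2 - x^2 <= (28335753/5000000)) by (apply (q_neg (-207/100) (-41/20)); [lra|lra|num|num]).
  apply (G_final (45/100) x (-88853967/2000000) (-211638289/5000000) (55846877/10000000) (28335753/5000000) (-207/100) (-41/20) ((-590431/1000000) - (1/100)) ((-5904309/10000000) + (1/100)) ((-8070883/10000000) - (1/100)) ((-50443/62500) + (1/100)) (311887367/10000000) (8029149/250000) (-332406769/5000000) (-319684551/5000000) (72601537/2000000) (371109583/10000000)); try assumption; try lra; try num; repeat split; num.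
Qed.

Lemma IB18 : forall x, (-41/20) <= x <= (-101/50) -> Gf (45/100) x < 0.
Proof.
  intros x Hx.
  assert (Hs0 : (-763027/1250000) <= sin (-497/200) <= (-1220843/2000000)) by (apply sin_bnd_neg; [lra|num|num]).
  assert (Hc0 : (-61881/78125) <= cos (-497/200) <= (-3960383/5000000)).
  { apply (cos_bnd_half _ _ _ (806077/2500000) (3224309/10000000)); [lra| apply cos_bnd; [lra|num|num] |lra|lra]. }
  assert (Hs := sin_near x (45/100) (-497/200) (3/200) _ _ Hs0 ltac:(lra)).
  assert (Hc := cos_near x (45/100) (-497/200) (3/200) _ _ Hc0 ltac:(lra)).
  assert (H1 : (-474610097/10000000) <= 3*x^4 - PI^4 <= (-444257431/10000000)) by (apply (p1_neg (-41/20) (-101/50)); [lra|lra|num|num]).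
  assert (H2 : (56670877/10000000) <= PI^2 - x^2 <= (28946253/5000000)) by (apply (q_neg (-41/20) (-101/50)); [lra|lra|num|num]).
  apply (G_final (45/100) x (-474610097/10000000) (-444257431/10000000) (56670877/10000000) (28946253/5000000) (-41/20) (-101/50) ((-763027/1250000) - (3/200)) ((-1220843/2000000) + (3/200)) ((-61881/78125) - (3/200)) ((-3960383/5000000) + (3/200)) (321158829/10000000) (167577113/5000000) (-171766541/2500000) (-324370417/5000000) (383046799/10000000) (1207107/31250)); try assumption; try lra; try num; repeat split; num.
Qed.

Lemma IB19 : forall x, (-101/50) <= x <= (-99/50) -> Gf (45/100) x < 0.
Proof.
  intros x Hx.
  assert (Hs0 : (-398603/625000) <= sin (-49/20) <= (-3188823/5000000)) by (apply sin_bnd_neg; [lra|num|num]).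
  assert (Hc0 : (-3851157/5000000) <= cos (-49/20) <= (-962789/1250000)).
  { apply (cos_bnd_half _ _ _ (3389459/10000000) (169473/500000)); [lra| apply cos_bnd; [lra|num|num] |lra|lra]. }
  assert (Hs := sin_near x (45/100) (-49/20) (1/50) _ _ Hs0 ltac:(lra)).
  assert (Hc := cos_near x (45/100) (-49/20) (1/50) _ _ Hc0 ltac:(lra)).
  assert (H1 : (-513013937/10000000) <= 3*x^4 - PI^4 <= (-237298847/5000000)) by (apply (p1_neg (-101/50) (-99/50)); [lra|lra|num|num]).
  assert (H2 : (57891877/10000000) <= PI^2 - x^2 <= (29746253/5000000)) by (apply (q_neg (-101/50) (-99/50)); [lra|lra|num|num]).
  apply (G_final (45/100) x (-513013937/10000000) (-237298847/5000000) (57891877/10000000) (29746253/5000000) (-101/50) (-99/50) ((-398603/625000) - (1/50)) ((-3188823/5000000) + (1/50)) ((-3851157/5000000) - (1/50)) ((-962789/1250000) + (1/50)) (167573471/5000000) (88483957/2500000) (-714950373/10000000) (-132718189/2000000) (202699861/5000000) (204971497/5000000)); try assumption; try lra; try num; repeat split; num.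
Qed.

Lemma IB20 : forall x, (-99/50) <= x <= (-193/100) -> Gf (45/100) x < 0.
Proof.
  intros x Hx.
  assert (Hs0 : (-3358839/5000000) <= sin (-481/200) <= (-6717677/10000000)) by (apply sin_bnd_neg; [lra|num|num]).
  assert (Hc0 : (-7407619/10000000) <= cos (-481/200) <= (-57872/78125)).
  { apply (cos_bnd_half _ _ _ (720053/2000000) (1800133/5000000)); [lra| apply cos_bnd; [lra|num|num] |lra|lra]. }
  assert (Hs := sin_near x (45/100) (-481/200) (1/40) _ _ Hs0 ltac:(lra)).
  assert (Hc := cos_near x (45/100) (-481/200) (1/40) _ _ Hc0 ltac:(lra)).
  assert (H1 : (-278926811/5000000) <= 3*x^4 - PI^4 <= (-256500767/5000000)) by (apply (p1_neg (-99/50) (-193/100)); [lra|lra|num|num]).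
  assert (H2 : (59491877/10000000) <= PI^2 - x^2 <= (30723753/5000000)) by (apply (q_neg (-99/50) (-193/100)); [lra|lra|num|num]).
  apply (G_final (45/100) x (-278926811/5000000) (-256500767/5000000) (59491877/10000000) (30723753/5000000) (-99/50) (-193/100) ((-3358839/5000000) - (1/40)) ((-6717677/10000000) + (1/40)) ((-7407619/10000000) - (1/40)) ((-57872/78125) + (1/40)) (176964171/5000000) (943949/25000) (-93450951/1250000) (-6830817/100000) (8543661/200000) (22089759/500000)); try assumption; try lra; try num; repeat split; num.
Qed.

Lemma IB21 : forall x, (-193/100) <= x <= (-93/50) -> Gf (45/100) x < 0.
Proof.
  intros x Hx.
  assert (Hs0 : (-7149781/10000000) <= sin (-469/200) <= (-357489/500000)) by (apply sin_bnd_neg; [lra|num|num]).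
  assert (Hc0 : (-6991471/10000000) <= cos (-469/200) <= (-6991469/10000000)).
  { apply (cos_bnd_half _ _ _ (775697/2000000) (1939243/5000000)); [lra| apply cos_bnd; [lra|num|num] |lra|lra]. }
  assert (Hs := sin_near x (45/100) (-469/200) (7/200) _ _ Hs0 ltac:(lra)).
  assert (Hc := cos_near x (45/100) (-469/200) (7/200) _ _ Hc0 ltac:(lra)).
  assert (H1 : (-615035057/10000000) <= 3*x^4 - PI^4 <= (-278920609/5000000)) by (apply (p1_neg (-193/100) (-93/50)); [lra|lra|num|num]).
  assert (H2 : (61446877/10000000) <= PI^2 - x^2 <= (32050253/5000000)) by (apply (q_neg (-193/100) (-93/50)); [lra|lra|num|num]).
  apply (G_final (45/100) x (-615035057/10000000) (-278920609/5000000) (61446877/10000000) (32050253/5000000) (-193/100) (-93/50) ((-7149781/10000000) - (7/200)) ((-357489/500000) + (7/200)) ((-6991471/10000000) - (7/200)) ((-6991469/10000000) + (7/200)) (377571869/10000000) (410887487/10000000) (-15860257/200000) (-175570919/2500000) (112881551/2500000) (477537449/10000000)); try assumption; try lra; try num; repeat split; num.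
Qed.

Lemma IB22 : forall x, (-93/50) <= x <= (-171/100) -> Gf (45/100) x < 0.
Proof.
  intros x Hx.
  assert (Hs0 : (-49213/62500) <= sin (-447/200) <= (-7874079/10000000)) by (apply sin_bnd_neg; [lra|num|num]).
  assert (Hc0 : (-1541081/2500000) <= cos (-447/200) <= (-6164321/10000000)).
  { apply (cos_bnd_half _ _ _ (4379313/10000000) (2189657/5000000)); [lra| apply cos_bnd; [lra|num|num] |lra|lra]. }
  assert (Hs := sin_near x (45/100) (-447/200) (3/40) _ _ Hs0 ltac:(lra)).
  assert (Hc := cos_near x (45/100) (-447/200) (3/40) _ _ Hc0 ltac:(lra)).
  assert (H1 : (-358794599/5000000) <= 3*x^4 - PI^4 <= (-307511327/5000000)) by (apply (p1_neg (-93/50) (-171/100)); [lra|lra|num|num]).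
  assert (H2 : (64099877/10000000) <= PI^2 - x^2 <= (34727753/5000000)) by (apply (q_neg (-93/50) (-171/100)); [lra|lra|num|num]).
  apply (G_final (45/100) x (-358794599/5000000) (-307511327/5000000) (64099877/10000000) (34727753/5000000) (-93/50) (-171/100) ((-49213/62500) - (3/40)) ((-7874079/10000000) + (3/40)) ((-1541081/2500000) - (3/40)) ((-6164321/10000000) + (3/40)) (410879423/10000000) (120601683/2500000) (-448638261/5000000) (-702603813/10000000) (248082211/5000000) (250270253/5000000)); try assumption; try lra; try num; repeat split; num.
Qed.

Lemma IB23 : forall x, (-171/100) <= x <= (-141/100) -> Gf (45/100) x < 0.
Proof.
  intros x Hx.
  assert (Hs0 : (-4525453/5000000) <= sin (-201/100) <= (-1810181/2000000)) by (apply sin_bnd_neg; [lra|num|num]).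
  assert (Hc0 : (-4252189/10000000) <= cos (-201/100) <= (-2126093/5000000)).
  { apply (cos_bnd_half _ _ _ (2680441/5000000) (5360883/10000000)); [lra| apply cos_bnd; [lra|num|num] |lra|lra]. }
  assert (Hs := sin_near x (45/100) (-201/100) (15/100) _ _ Hs0 ltac:(lra)).
  assert (Hc := cos_near x (45/100) (-201/100) (15/100) _ _ Hc0 ltac:(lra)).
  assert (H1 : (-427761887/5000000) <= 3*x^4 - PI^4 <= (-358788397/5000000)) by (apply (p1_neg (-171/100) (-141/100)); [lra|lra|num|num]).
  assert (H2 : (69454877/10000000) <= PI^2 - x^2 <= (39407753/5000000)) by (apply (q_neg (-171/100) (-141/100)); [lra|lra|num|num]).
  apply (G_final (45/100) x (-427761887/5000000) (-358788397/5000000) (69454877/10000000) (39407753/5000000) (-171/100) (-141/100) ((-4525453/5000000) - (15/100)) ((-1810181/2000000) + (15/100)) ((-4252189/10000000) - (15/100)) ((-2126093/5000000) + (15/100)) (482397993/10000000) (621188399/10000000) (-1062232163/10000000) (-68018117/1000000) (98422689/2000000) (513598339/10000000)); try assumption; try lra; try num; repeat split; num.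
Qed.

Lemma IB24 : forall x, (-141/100) <= x <= (-91/100) -> Gf (45/100) x < 0.
Proof.
  intros x Hx.
  assert (Hs0 : (-9992317/10000000) <= sin (-161/100) <= (-2498079/2500000)) by (apply sin_bnd_neg; [lra|num|num]).
  assert (Hc0 : (-391937/10000000) <= cos (-161/100) <= (-3062/78125)) by (apply cos_bnd; [lra|num|num]).
  assert (Hs := sin_near x (45/100) (-161/100) (1/4) _ _ Hs0 ltac:(lra)).
  assert (Hc := cos_near x (45/100) (-161/100) (1/4) _ _ Hc0 ltac:(lra)).
  assert (H1 : (-476763767/5000000) <= 3*x^4 - PI^4 <= (-85551137/1000000)) by (apply (p1_neg (-141/100) (-91/100)); [lra|lra|num|num]).
  assert (H2 : (78814877/10000000) <= PI^2 - x^2 <= (45207753/5000000)) by (apply (q_neg (-141/100) (-91/100)); [lra|lra|num|num]).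
  apply (G_final (45/100) x (-476763767/5000000) (-85551137/1000000) (78814877/10000000) (45207753/5000000) (-141/100) (-91/100) ((-9992317/10000000) - (1/4)) ((-2498079/2500000) + (1/4)) ((-391937/10000000) - (1/4)) ((-3062/78125) + (1/4)) (621178483/10000000) (817496373/10000000) (-576334943/5000000) (-565272419/10000000) (68938539/2500000) (211759979/5000000)); try assumption; try lra; try num; repeat split; num.
Qed.

Lemma IB25 : forall x, (-91/100) <= x <= (0) -> Gf (45/100) x < 0.
Proof.
  intros x Hx.
  assert (Hs0 : (-1966063/2500000) <= sin (-181/200) <= (-7864251/10000000)) by (apply sin_bnd_neg; [lra|num|num]).
  assert (Hc0 : (1235371/2000000) <= cos (-181/200) <= (772107/1250000)) by (apply cos_bnd; [lra|num|num]).
  assert (Hs := sin_near x (45/100) (-181/200) (91/200) _ _ Hs0 ltac:(lra)).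
  assert (Hc := cos_near x (45/100) (-181/200) (91/200) _ _ Hc0 ltac:(lra)).
  assert (H1 : (-487050011/5000000) <= 3*x^4 - PI^4 <= (-95351513/1000000)) by (apply (p1_neg (-91/100) (0)); [lra|lra|num|num]).
  assert (H2 : (90414877/10000000) <= PI^2 - x^2 <= (49348253/5000000)) by (apply (q_neg (-91/100) (0)); [lra|lra|num|num]).
  apply (G_final (45/100) x (-487050011/5000000) (-95351513/1000000) (90414877/10000000) (49348253/5000000) (-91/100) (0) ((-1966063/2500000) - (91/200)) ((-7864251/10000000) + (91/200)) ((1235371/2000000) - (91/200)) ((772107/1250000) + (91/200)) (408742499/5000000) (97410003/1000000) (-221607757/2500000) (0) (-31024617/2000000) (0)); try assumption; try lra; try num; repeat split; num.
Qed.

Lemma IB26 : forall x, (0) <= x <= (1) -> Gf (45/100) x < 0.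
Proof.
  intros x Hx.
  assert (Hs0 : (499791/10000000) <= sin (1/20) <= (31237/625000)) by (apply sin_bnd; [lra|num|num]).
  assert (Hc0 : (4993751/5000000) <= cos (1/20) <= (9987503/10000000)) by (apply cos_bnd; [lra|num|num]).
  assert (Hs := sin_near x (45/100) (1/20) (1/2) _ _ Hs0 ltac:(lra)).
  assert (Hc := cos_near x (45/100) (1/20) (1/2) _ _ Hc0 ltac:(lra)).
  assert (H1 : (-487050011/5000000) <= 3*x^4 - PI^4 <= (-944087619/10000000)) by (apply (p1_pos (0) (1)); [lra|lra|num|num]).
  assert (H2 : (88695877/10000000) <= PI^2 - x^2 <= (49348253/5000000)) by (apply (q_pos (0) (1)); [lra|lra|num|num]).
  apply (G_final (45/100) x (-487050011/5000000) (-944087619/10000000) (88695877/10000000) (49348253/5000000) (0) (1) ((499791/10000000) - (1/2)) ((31237/625000) + (1/2)) ((4993751/5000000) - (1/2)) ((9987503/10000000) + (1/2)) (786695859/10000000) (97410003/1000000) (0) (97410003/1000000) (-29428993/625000) (-438365373/10000000)); try assumption; try lra; try num; repeat split; num.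
Qed.

Lemma IB27 : forall x, (1) <= x <= (2) -> Gf (45/100) x < 0.
Proof.
  intros x Hx.
  assert (Hs0 : (1084279/1250000) <= sin (21/20) <= (8674233/10000000)) by (apply sin_bnd; [lra|num|num]).
  assert (Hc0 : (497571/1000000) <= cos (21/20) <= (4975711/10000000)) by (apply cos_bnd; [lra|num|num]).
  assert (Hs := sin_near x (45/100) (21/20) (1/2) _ _ Hs0 ltac:(lra)).
  assert (Hc := cos_near x (45/100) (21/20) (1/2) _ _ Hc0 ltac:(lra)).
  assert (H1 : (-472050011/5000000) <= 3*x^4 - PI^4 <= (-494087619/10000000)) by (apply (p1_pos (1) (2)); [lra|lra|num|num]).
  assert (H2 : (58695877/10000000) <= PI^2 - x^2 <= (44348253/5000000)) by (apply (q_pos (1) (2)); [lra|lra|num|num]).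
  apply (G_final (45/100) x (-472050011/5000000) (-494087619/10000000) (58695877/10000000) (44348253/5000000) (1) (2) ((1084279/1250000) - (1/2)) ((8674233/10000000) + (1/2)) ((497571/1000000) - (1/2)) ((4975711/10000000) + (1/2)) (344520597/10000000) (393353509/5000000) (344520597/10000000) (393353509/2500000) (2293219/10000000) (6329243/500000)); try assumption; try lra; try num; repeat split; num.
Qed.

Lemma IB28 : forall x, (2) <= x <= (23/10) -> Gf (45/100) x < 0.
Proof.
  intros x Hx.
  assert (Hs0 : (1239581/1250000) <= sin (17/10) <= (9916649/10000000)) by (apply sin_bnd; [lra|num|num]).
  assert (Hc0 : (-257689/2000000) <= cos (17/10) <= (-322111/2500000)) by (apply cos_bnd; [lra|num|num]).
  assert (Hs := sin_near x (45/100) (17/10) (15/100) _ _ Hs0 ltac:(lra)).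
  assert (Hc := cos_near x (45/100) (17/10) (15/100) _ _ Hc0 ltac:(lra)).
  assert (H1 : (-247050011/5000000) <= 3*x^4 - PI^4 <= (-134564619/10000000)) by (apply (p1_pos (2) (23/10)); [lra|lra|num|num]).
  assert (H2 : (45795877/10000000) <= PI^2 - x^2 <= (29348253/5000000)) by (apply (q_pos (2) (23/10)); [lra|lra|num|num]).
  apply (G_final (45/100) x (-247050011/5000000) (-134564619/10000000) (45795877/10000000) (29348253/5000000) (2) (23/10) ((1239581/1250000) - (15/100)) ((9916649/10000000) + (15/100)) ((-257689/2000000) - (15/100)) ((-322111/2500000) + (15/100)) (41945247/2000000) (172263991/5000000) (41945247/1000000) (792414359/10000000) (68888537/5000000) (353038379/10000000)); try assumption; try lra; try num; repeat split; num.
Qed.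

Lemma IB29 : forall x, (23/10) <= x <= (13/5) -> Gf (45/100) x < 0.
Proof.
  intros x Hx.
  assert (Hs0 : (4546487/5000000) <= sin (2) <= (363719/400000)) by (apply sin_bnd; [lra|num|num]).
  assert (Hc0 : (-4161469/10000000) <= cos (2) <= (-1040367/2500000)) by (apply cos_bnd; [lra|num|num]).
  assert (Hs := sin_near x (45/100) (2) (15/100) _ _ Hs0 ltac:(lra)).
  assert (Hc := cos_near x (45/100) (2) (15/100) _ _ Hc0 ltac:(lra)).
  assert (H1 : (-67288511/5000000) <= 3*x^4 - PI^4 <= (396840381/10000000)) by (apply (p1_pos (23/10) (13/5)); [lra|lra|num|num]).
  assert (H2 : (31095877/10000000) <= PI^2 - x^2 <= (22898253/5000000)) by (apply (q_pos (23/10) (13/5)); [lra|lra|num|num]).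
  apply (G_final (45/100) x (-67288511/5000000) (396840381/10000000) (31095877/10000000) (22898253/5000000) (23/10) (13/5) ((4546487/5000000) - (15/100)) ((363719/400000) + (15/100)) ((-4161469/10000000) - (15/100)) ((-1040367/2500000) + (15/100)) (24173839/2500000) (209731997/10000000) (111199659/5000000) (545303193/10000000) (19047591/2500000) (168867223/10000000)); try assumption; try lra; try num; repeat split; num.
Qed.

Lemma IB30 : forall x, (13/5) <= x <= (3) -> Gf (45/100) x < 0.
Proof.
  intros x Hx.
  assert (Hs0 : (7114733/10000000) <= sin (47/20) <= (3557367/5000000)) by (apply sin_bnd; [lra|num|num]).
  assert (Hc0 : (-1756783/2500000) <= cos (47/20) <= (-702713/1000000)).
  { apply (cos_bnd_half _ _ _ (385543/1000000) (3855431/10000000)); [lra| apply cos_bnd; [lra|num|num] |lra|lra]. }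
  assert (Hs := sin_near x (45/100) (47/20) (1/5) _ _ Hs0 ltac:(lra)).
  assert (Hc := cos_near x (45/100) (47/20) (1/5) _ _ Hc0 ltac:(lra)).
  assert (H1 : (198413989/5000000) <= 3*x^4 - PI^4 <= (1455912381/10000000)) by (apply (p1_pos (13/5) (3)); [lra|lra|num|num]).
  assert (H2 : (8695877/10000000) <= PI^2 - x^2 <= (15548253/5000000)) by (apply (q_pos (13/5) (3)); [lra|lra|num|num]).
  apply (G_final (45/100) x (198413989/5000000) (1455912381/10000000) (8695877/10000000) (15548253/5000000) (13/5) (3) ((7114733/10000000) - (1/5)) ((3557367/5000000) + (1/5)) ((-1756783/2500000) - (1/5)) ((-702713/1000000) + (1/5)) (7561827/10000000) (96699269/10000000) (78643/40000) (290097807/10000000) (-199490583/10000000) (2513987/2500000)); try assumption; try lra; try num; repeat split; num.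
Qed.


Lemma Gneg_A x : -PI < x < PI -> Gf (15/100) x < 0.
Proof.
  intros Hx.
  destruct (Rle_lt_dec x (-265/100)). { apply E_neg; lra. }
  destruct (Rle_lt_dec x (-49/20)). { apply IA0; lra. }
  destruct (Rle_lt_dec x (-23/10)). { apply IA1; lra. }
  destruct (Rle_lt_dec x (-43/20)). { apply IA2; lra. }
  destruct (Rle_lt_dec x (-39/20)). { apply IA3; lra. }
  destruct (Rle_lt_dec x (-33/20)). { apply IA4; lra. }
  destruct (Rle_lt_dec x (-23/20)). { apply IA5; lra. }
  destruct (Rle_lt_dec x (-3/20)). { apply IA6; lra. }
  destruct (Rle_lt_dec x (0)). { apply IA7; lra. }
  destruct (Rle_lt_dec x (1)). { apply IA8; lra. }
  destruct (Rle_lt_dec x (3/2)). { apply IA9; lra. }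
  destruct (Rle_lt_dec x (2)). { apply IA10; lra. }
  destruct (Rle_lt_dec x (23/10)). { apply IA11; lra. }
  destruct (Rle_lt_dec x (13/5)). { apply IA12; lra. }
  destruct (Rle_lt_dec x (3)). { apply IA13; lra. }
  apply E_pos; lra.
Qed.

Lemma Gneg_B x : -PI < x < PI -> Gf (45/100) x < 0.
Proof.
  intros Hx.
  destruct (Rle_lt_dec x (-265/100)). { apply E_neg; lra. }
  destruct (Rle_lt_dec x (-49/20)). { apply IB0; lra. }
  destruct (Rle_lt_dec x (-47/20)). { apply IB1; lra. }
  destruct (Rle_lt_dec x (-23/10)). { apply IB2; lra. }
  destruct (Rle_lt_dec x (-227/100)). { apply IB3; lra. }
  destruct (Rle_lt_dec x (-56/25)). { apply IB4; lra. }
  destruct (Rle_lt_dec x (-111/50)). { apply IB5; lra. }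
  destruct (Rle_lt_dec x (-441/200)). { apply IB6; lra. }
  destruct (Rle_lt_dec x (-219/100)). { apply IB7; lra. }
  destruct (Rle_lt_dec x (-87/40)). { apply IB8; lra. }
  destruct (Rle_lt_dec x (-433/200)). { apply IB9; lra. }
  destruct (Rle_lt_dec x (-431/200)). { apply IB10; lra. }
  destruct (Rle_lt_dec x (-429/200)). { apply IB11; lra. }
  destruct (Rle_lt_dec x (-427/200)). { apply IB12; lra. }
  destruct (Rle_lt_dec x (-53/25)). { apply IB13; lra. }
  destruct (Rle_lt_dec x (-421/200)). { apply IB14; lra. }
  destruct (Rle_lt_dec x (-209/100)). { apply IB15; lra. }
  destruct (Rle_lt_dec x (-207/100)). { apply IB16; lra. }
  destruct (Rle_lt_dec x (-41/20)). { apply IB17; lra. }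
  destruct (Rle_lt_dec x (-101/50)). { apply IB18; lra. }
  destruct (Rle_lt_dec x (-99/50)). { apply IB19; lra. }
  destruct (Rle_lt_dec x (-193/100)). { apply IB20; lra. }
  destruct (Rle_lt_dec x (-93/50)). { apply IB21; lra. }
  destruct (Rle_lt_dec x (-171/100)). { apply IB22; lra. }
  destruct (Rle_lt_dec x (-141/100)). { apply IB23; lra. }
  destruct (Rle_lt_dec x (-91/100)). { apply IB24; lra. }
  destruct (Rle_lt_dec x (0)). { apply IB25; lra. }
  destruct (Rle_lt_dec x (1)). { apply IB26; lra. }
  destruct (Rle_lt_dec x (2)). { apply IB27; lra. }
  destruct (Rle_lt_dec x (23/10)). { apply IB28; lra. }
  destruct (Rle_lt_dec x (13/5)). { apply IB29; lra. }
  destruct (Rle_lt_dec x (3)). { apply IB30; lra. }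
  apply E_pos; lra.
Qed.

Definition phi x := 1 - 1 / (1 - (x / PI) ^ 2).
Definition f x := 2 * exp (phi x) - 1.
Definition Dd x := PI^2 - x^2.
Definition f1 x := 2 * exp (phi x) * (-2 * x * PI^2 / (Dd x)^2).
Definition f2 x := 2 * exp (phi x) * ((-2 * x * PI^2 / (Dd x)^2)^2 + (-2 * PI^2 * (PI^2 + 3*x^2) / (Dd x)^3)).

Lemma PIpos : 0 < PI.
Proof. exact PI_RGT_0. Qed.

Lemma one_minus_ne x : Dd x <> 0 -> 1 - (x/PI)^2 <> 0.
Proof.
  intros H E. apply H. unfold Dd. assert (PI <> 0) by (generalize PIpos; lra).
  replace (PI^2 - x^2) with (PI^2 * (1 - (x/PI)^2)) by (field; auto). rewrite E; ring.
Qed.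

Ltac fix_exp x := repeat match goal with |- context [exp ?a] => lazymatch a with (1 - PI^2/(PI^2 - x^2)) => fail | _ => replace a with (1 - PI^2/(PI^2 - x^2)) by (field; auto) end end.

Lemma der_f x : Dd x <> 0 -> is_derive f x (f1 x).
Proof.
  intros H. assert (HP : PI <> 0) by (generalize PIpos; lra). assert (H1 := one_minus_ne x H).
  assert (H1' : 1 + - (x * / PI * (x * / PI * 1)) <> 0) by (contradict H1; rewrite <- H1; field; auto).
  assert (H2 : PI * PI + - (x * x) <> 0) by (intro E; apply H; unfold Dd; replace (PI^2 - x^2) with (PI*PI + -(x*x)) by ring; exact E).
  unfold f, f1, phi. auto_derive.
  - repeat split; auto.
  - unfold Dd in *. fix_exp x. field. repeat split; auto.
Qed.

Lemma der_f1 x : Dd x <> 0 -> is_derive f1 x (f2 x).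
Proof.
  intros H. assert (HP : PI <> 0) by (generalize PIpos; lra). assert (H1 := one_minus_ne x H).
  assert (H1' : 1 + - (x * / PI * (x * / PI * 1)) <> 0) by (contradict H1; rewrite <- H1; field; auto).
  assert (H2 : PI * PI + - (x * x) <> 0) by (intro E; apply H; unfold Dd; replace (PI^2 - x^2) with (PI*PI + -(x*x)) by ring; exact E).
  unfold f1, f2, phi, Dd in *. auto_derive.
  - repeat split; auto.
  - fix_exp x. field. repeat split; auto.
Qed.

Lemma Dd_pos x : Rabs x < PI -> 0 < Dd x.
Proof. intros H. unfold Dd. destruct (Rabs_def2 _ _ H). generalize PIpos; intros. nra. Qed.

Lemma phi_eq x : Dd x <> 0 -> phi x = 1 - PI^2 / Dd x.
Proof.
  intros H. assert (HP : PI <> 0) by (generalize PIpos; lra). assert (H1 := one_minus_ne x H).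
  unfold phi, Dd in *. field. split; auto.
Qed.

Lemma abs_ball x y e : Rabs (y - x) < e -> Rabs y < Rabs x + e.
Proof.
  intros H. replace y with ((y - x) + x) by ring.
  generalize (Rabs_triang (y - x) x). lra.
Qed.
Lemma abs_ball2 x y e : Rabs (y - x) < e -> Rabs x - e < Rabs y.
Proof.
  intros H. replace x with ((x - y) + y) by ring. rewrite Rabs_minus_sym in H.
  generalize (Rabs_triang (x - y) y). replace ((x - y) + y) with x by ring. lra.
Qed.

Lemma z1_loc x : Rabs x < PI -> locally x (fun t => f t = z1 t).
Proof.
  intros Hx. assert (Hp : 0 < PI - Rabs x) by lra. exists (mkposreal _ Hp). intros t Ht.
  change (Rabs (t - x) < PI - Rabs x) in Ht. apply abs_ball in Ht.
  unfold z1, f, phi. destruct (Rlt_dec (Rabs t) PI); [reflexivity| lra].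
Qed.

Lemma z1_out_loc x : PI < Rabs x -> locally x (fun t => -1 = z1 t).
Proof.
  intros Hx. assert (Hp : 0 < Rabs x - PI) by lra. exists (mkposreal _ Hp). intros t Ht.
  change (Rabs (t - x) < Rabs x - PI) in Ht. apply abs_ball2 in Ht.
  unfold z1. destruct (Rlt_dec (Rabs t) PI); [lra| reflexivity].
Qed.

Lemma Dz1_in x : Rabs x < PI -> Derive z1 x = f1 x.
Proof.
  intros H. apply is_derive_unique. apply (is_derive_ext_loc f). apply z1_loc; auto.
  apply der_f. generalize (Dd_pos x H). lra.
Qed.

Lemma Dz1_out x : PI < Rabs x -> Derive z1 x = 0.
Proof.
  intros H. apply is_derive_unique. apply (is_derive_ext_loc (fun _ => -1)). apply z1_out_loc; auto.
  apply is_derive_Reals. apply derivable_pt_lim_const.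
Qed.

Lemma Dz1_loc x : Rabs x < PI -> locally x (fun t => f1 t = Derive z1 t).
Proof.
  intros Hx. assert (Hp : 0 < PI - Rabs x) by lra. exists (mkposreal _ Hp). intros t Ht.
  change (Rabs (t - x) < PI - Rabs x) in Ht. apply abs_ball in Ht.
  rewrite Dz1_in; auto. lra.
Qed.

Lemma D2z1_in x : Rabs x < PI -> Derive_n z1 2 x = f2 x.
Proof.
  intros H. change (Derive_n z1 2 x) with (Derive (fun y => Derive z1 y) x).
  apply is_derive_unique. apply (is_derive_ext_loc f1). apply Dz1_loc; auto.
  apply der_f1. generalize (Dd_pos x H). lra.
Qed.

Lemma Dz2 C x : Derive (z2 C) x = cos (x - C).
Proof. apply is_derive_unique. unfold z2. auto_derive; auto. rewrite Rmult_1_l. reflexivity. Qed.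

Lemma D2z2 C x : Derive_n (z2 C) 2 x = - sin (x - C).
Proof.
  change (Derive_n (z2 C) 2 x) with (Derive (fun y => Derive (z2 C) y) x).
  rewrite (Derive_ext _ (fun y => cos (y - C))) by apply Dz2.
  apply is_derive_unique. auto_derive; auto. rewrite Rmult_1_l. unfold Rminus. reflexivity.
Qed.

Lemma flat g x M d : 0 < d -> 0 <= M ->
  (forall h, h <> 0 -> Rabs h < d -> Rabs (g (x+h) - g x) <= M * h^2) -> is_derive g x 0.
Proof.
  intros Hd HM H. apply is_derive_Reals. intros eps Heps.
  assert (Hpos: 0 < Rmin d (eps/(M+1))) by (apply Rmin_pos; [lra | apply Rdiv_lt_0_compat; lra]).
  exists (mkposreal _ Hpos). intros h Hh0 Hh. simpl in Hh.
  assert (Hd' : Rabs h < d) by (eapply Rlt_le_trans; [exact Hh| apply Rmin_l]).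
  assert (He : Rabs h < eps/(M+1)) by (eapply Rlt_le_trans; [exact Hh| apply Rmin_r]).
  specialize (H h Hh0 Hd').
  assert (Ha : 0 < Rabs h) by (apply Rabs_pos_lt; auto).
  rewrite Rminus_0_r. unfold Rdiv. rewrite Rabs_mult, Rabs_inv.
  apply Rle_lt_trans with (M * Rabs h).
  - replace (M * Rabs h) with (M * h^2 * / Rabs h) by (rewrite <- pow2_abs; field; lra).
    apply Rmult_le_compat_r; [left; apply Rinv_0_lt_compat; auto | auto].
  - assert ((M+1) * Rabs h < (M+1) * (eps/(M+1))) by (apply Rmult_lt_compat_l; lra).
    replace ((M+1) * (eps/(M+1))) with eps in H0 by (field; lra). nra.
Qed.

Lemma exp_neg2 B : 0 < B -> exp (-B) <= 4 / B^2.
Proof.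
  intros HB. assert (E : exp B = exp (B/2) * exp (B/2)) by (rewrite <- exp_plus; f_equal; field).
  assert (H1 : B/2 < exp (B/2)) by (generalize (exp_ineq1 (B/2) ltac:(lra)); lra).
  assert (H2 : B^2/4 <= exp B) by (rewrite E; nra).
  rewrite exp_Ropp. replace (4 / B^2) with (/ (B^2/4)) by (field; lra).
  apply Rinv_le_contravar; auto. nra.
Qed.

Lemma exp_neg4 B : 0 < B -> exp (-B) <= 256 / B^4.
Proof.
  intros HB. assert (E : exp B = (exp (B/4) * exp (B/4)) * (exp (B/4) * exp (B/4))) by (rewrite <- !exp_plus; f_equal; field).
  assert (H1 : B/4 < exp (B/4)) by (generalize (exp_ineq1 (B/4) ltac:(lra)); lra).
  assert (H3 : (B/4)*(B/4) <= exp (B/4) * exp (B/4)) by (apply Rmult_le_compat; lra).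
  assert (H2 : B^4/256 <= exp B).
  { rewrite E. replace (B^4/256) with (((B/4)*(B/4))*((B/4)*(B/4))) by field.
    apply Rmult_le_compat; nra. }
  rewrite exp_Ropp. replace (256 / B^4) with (/ (B^4/256)) by (field; lra).
  apply Rinv_le_contravar; auto. assert (0 < B^4) by (apply pow_lt; lra). lra.
Qed.

Lemma exp_phi_bound2 t : 0 < Dd t -> exp (phi t) <= 12 * (Dd t)^2 / PI^4.
Proof.
  intros HD. generalize PIpos; intro HP.
  rewrite phi_eq by lra. replace (1 - PI^2/Dd t) with (1 + -(PI^2/Dd t)) by ring. rewrite exp_plus.
  assert (HB0 : 0 < PI^2/Dd t) by (apply Rdiv_lt_0_compat; [apply pow_lt|]; lra).
  assert (HB := exp_neg2 _ HB0).
  replace (4/(PI^2/Dd t)^2) with (4*(Dd t)^2/PI^4) in HB by (field; lra).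
  generalize exp_le_3 (exp_pos (-(PI^2/Dd t))) (exp_pos 1); intros.
  replace (12 * Dd t ^ 2 / PI ^ 4) with (3 * (4 * Dd t ^ 2 / PI ^ 4)) by (field; lra).
  apply Rmult_le_compat; lra.
Qed.

Lemma exp_phi_bound4 t : 0 < Dd t -> exp (phi t) <= 768 * (Dd t)^4 / PI^8.
Proof.
  intros HD. generalize PIpos; intro HP.
  rewrite phi_eq by lra. replace (1 - PI^2/Dd t) with (1 + -(PI^2/Dd t)) by ring. rewrite exp_plus.
  assert (HB0 : 0 < PI^2/Dd t) by (apply Rdiv_lt_0_compat; [apply pow_lt|]; lra).
  assert (HB := exp_neg4 _ HB0).
  replace (256/(PI^2/Dd t)^4) with (256*(Dd t)^4/PI^8) in HB by (field; lra).
  generalize exp_le_3 (exp_pos (-(PI^2/Dd t))) (exp_pos 1); intros.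
  replace (768 * Dd t ^ 4 / PI ^ 8) with (3 * (256 * Dd t ^ 4 / PI ^ 8)) by (field; lra).
  apply Rmult_le_compat; lra.
Qed.

Lemma near_PI h : h < 0 -> -1 < h -> Rabs (PI + h) < PI /\ 0 < Dd (PI + h) /\ Dd (PI + h) <= 2*PI*(-h) /\ 0 < PI + h.
Proof.
  intros H1 H2. generalize PI_lb; unfold PL; intro HP.
  assert (Ha : Rabs (PI + h) < PI) by (rewrite Rabs_right; lra).
  repeat split; auto. apply Dd_pos; auto. unfold Dd; nra. lra.
Qed.

Lemma z1_PI : z1 PI = -1.
Proof. unfold z1. generalize PIpos; intro. destruct (Rlt_dec (Rabs PI) PI) as [r|r]; auto. rewrite Rabs_right in r; lra. Qed.

Lemma z1_right h : 0 < h -> z1 (PI + h) = -1.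
Proof. intros. unfold z1. generalize PIpos; intro. destruct (Rlt_dec (Rabs (PI+h)) PI) as [r|r]; auto. rewrite Rabs_right in r; lra. Qed.

Lemma z1_bound h : h <> 0 -> Rabs h < 1 -> Rabs (z1 (PI + h) - z1 PI) <= 12 * h^2.
Proof.
  intros H0 H1. rewrite z1_PI. generalize PI_lb; unfold PL; intro HPl.
  destruct (Rabs_def2 _ _ H1) as [H1a H1b].
  destruct (Rlt_dec 0 h) as [Hp|Hn].
  - rewrite z1_right by auto. replace (-1 - -1) with 0 by ring. rewrite Rabs_R0. nra.
  - assert (Hh : h < 0) by (destruct (Rtotal_order h 0) as [|[|]]; auto; lra).
    destruct (near_PI h Hh H1b) as (Ha & HD & HDl & Ht).
    assert (E : z1 (PI+h) = f (PI+h)) by (unfold z1, f, phi; destruct Rlt_dec; [reflexivity| contradiction]).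
    rewrite E. unfold f. replace (2*exp(phi(PI+h)) - 1 - -1) with (2*exp(phi(PI+h))) by ring.
    generalize (exp_pos (phi (PI+h))); intro Hep.
    rewrite Rabs_right by lra.
    assert (X := exp_phi_bound2 _ HD).
    assert (HD2 : (Dd (PI+h))^2 <= 4*PI^2*h^2) by nra.
    assert (Y : 12 * Dd (PI + h) ^ 2 / PI ^ 4 <= 48 * h^2 / PI^2).
    { replace (48 * h^2 / PI^2) with (12 * (4 * PI^2 * h^2) / PI^4) by (field; lra).
      unfold Rdiv. apply Rmult_le_compat_r; [left; apply Rinv_0_lt_compat; apply pow_lt; lra | lra]. }
    assert (Z : 48 * h^2 / PI^2 <= 6 * h^2).
    { unfold Rdiv. assert (/ PI^2 <= / 9) by (apply Rinv_le_contravar; nra).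
      assert (0 <= h^2) by nra. nra. }
    lra.
Qed.

Lemma Dz1_PI : Derive z1 PI = 0.
Proof.
  apply is_derive_unique. apply (flat _ _ 12 1); try lra.
  intros h H0 H1. replace (PI + h) with (PI + h) by ring. apply z1_bound; auto.
Qed.

Lemma Dz1_bound h : h <> 0 -> Rabs h < 1 -> Rabs (Derive z1 (PI + h) - Derive z1 PI) <= 500 * h^2.
Proof.
  intros H0 H1. rewrite Dz1_PI. generalize PI_lb; unfold PL; intro HPl.
  destruct (Rabs_def2 _ _ H1) as [H1a H1b].
  destruct (Rlt_dec 0 h) as [Hp|Hn].
  - rewrite Dz1_out by (rewrite Rabs_right; lra). replace (0 - 0) with 0 by ring. rewrite Rabs_R0. nra.
  - assert (Hh : h < 0) by (destruct (Rtotal_order h 0) as [|[|]]; auto; lra).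
    destruct (near_PI h Hh H1b) as (Ha & HD & HDl & Ht).
    rewrite Dz1_in by auto. rewrite Rminus_0_r.
    set (t := PI + h) in *. set (D := Dd t) in *. assert (Htp : t <= PI) by (unfold t; lra).
    assert (X := exp_phi_bound4 _ HD). fold D in X.
    generalize (exp_pos (phi t)); intro Hep.
    assert (E : f1 t = - (4 * t * PI^2 / D^2 * exp (phi t))) by (unfold f1; fold D; field; lra).
    rewrite E, Rabs_Ropp.
    assert (P : 0 < 4 * t * PI^2 / D^2) by (apply Rdiv_lt_0_compat; [apply Rmult_lt_0_compat; [lra| apply pow_lt; lra] | apply pow_lt; lra]).
    rewrite Rabs_right by nra.
    assert (S1 : 4 * t * PI^2 / D^2 * exp (phi t) <= 4 * t * PI^2 / D^2 * (768 * D^4 / PI^8)) by (apply Rmult_le_compat_l; lra).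
    replace (4 * t * PI^2 / D^2 * (768 * D^4 / PI^8)) with (3072 * t * D^2 / PI^6) in S1 by (field; lra).
    assert (HD2 : D^2 <= 4*PI^2*h^2) by nra.
    assert (S2 : 3072 * t * D^2 / PI^6 <= 3072 * PI * (4*PI^2*h^2) / PI^6).
    { unfold Rdiv. apply Rmult_le_compat_r; [left; apply Rinv_0_lt_compat; apply pow_lt; lra|].
      apply Rmult_le_compat; nra. }
    replace (3072 * PI * (4*PI^2*h^2) / PI^6) with (12288 * h^2 / PI^3) in S2 by (field; lra).
    assert (S3 : 12288 * h^2 / PI^3 <= 500 * h^2).
    { unfold Rdiv. assert (/ PI^3 <= / 27) by (apply Rinv_le_contravar; [lra|]; simpl; nra).
      assert (0 <= h^2) by nra. nra. }
    lra.
Qed.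

Lemma D2z1_PI : Derive_n z1 2 PI = 0.
Proof.
  change (Derive_n z1 2 PI) with (Derive (fun y => Derive z1 y) PI).
  apply is_derive_unique. apply (flat _ _ 500 1); try lra.
  intros h H0 H1. apply Dz1_bound; auto.
Qed.

Lemma numer_eq C x : Rabs x < PI ->
  - f2 x * cos (x - C) + - sin (x - C) * f1 x = - (4 * exp (phi x) * PI^2 / (Dd x)^4) * Gf C x.
Proof.
  intros H. assert (HD := Dd_pos x H). unfold f1, f2, Gf. unfold Dd in *. field. lra.
Qed.

Theorem corollary1 (C : R) (hC : C = 15 / 100 \/ C = 45 / 100) :
  forall x : R, - PI < x <= PI -> (K C x = 0 <-> x = PI).
Proof.
  intros x [Hx1 Hx2]. split.
  - intros HK. destruct (Req_dec x PI) as [e|ne]; auto. exfalso.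
    assert (Hin : Rabs x < PI) by (apply Rabs_def1; lra).
    assert (HG : Gf C x < 0).
    { destruct hC as [-> | ->]; [apply Gneg_A | apply Gneg_B]; lra. }
    unfold K in HK. rewrite D2z1_in, Dz1_in, Dz2, D2z2 in HK by auto.
    set (R0 := Rpower _ _) in HK. assert (HR: 0 < R0) by (unfold R0, Rpower; apply exp_pos).
    rewrite numer_eq in HK by auto.
    assert (HD := Dd_pos x Hin). generalize (exp_pos (phi x)); intro He.
    assert (Hc : 0 < 4 * exp (phi x) * PI^2 / (Dd x)^4).
    { apply Rdiv_lt_0_compat; [apply Rmult_lt_0_compat; [lra| apply pow_lt; generalize PIpos; lra] | apply pow_lt; lra]. }
    assert (HN : 0 < - (4 * exp (phi x) * PI^2 / (Dd x)^4) * Gf C x) by nra.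
    assert (0 < - (4 * exp (phi x) * PI^2 / (Dd x)^4) * Gf C x / R0) by (apply Rdiv_lt_0_compat; auto).
    lra.
  - intros ->. unfold K. rewrite Dz1_PI, D2z1_PI. unfold Rdiv. ring.
Qed.
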